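(* Let $M$ be a timelike surface in $\mathbb{R}^{2,1}$ with a canonical null direction with respect to a constant vector $Z$. Then $M$ can be locally parametrized as $$\psi(x,y)=\alpha(x)+y\,T_0,$$ where $\alpha$ is a lightlike curve in $\mathbb{R}^{2,1}$, $T_0$ is a constant lightlike vector, and $\alpha'(x)$ and $T_0$ are linearly independent for every $x$.
   Context: $\mathbb{R}^{2,1}$ is $\mathbb{R}^{3}$ with the metric $-dx_1^2+dx_2^2+dx_3^2$. A surface is timelike if the induced metric has signature $(1,1)$; a vector $v$ is lightlike if $v\ne0$ and $\langle v,v\rangle=0$; a curve is lightlike if its velocity is lightlike everywhere. For a constant vector $Z$, $Z=Z^\top+Z^\perp$ along $M$; $M$ has a canonical null direction with respect to $Z$ if $Z^\top$ is lightlike everywhere on $M$. *)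

(* Defs.v *)
From Stdlib Require Import Reals Lra.
Open Scope R_scope.

Record vec := mkV { v1 : R; v2 : R; v3 : R }.

Definition vzero : vec := mkV 0 0 0.
Definition vadd (u w : vec) : vec := mkV (v1 u + v1 w) (v2 u + v2 w) (v3 u + v3 w).
Definition vscale (c : R) (u : vec) : vec := mkV (c * v1 u) (c * v2 u) (c * v3 u).
Definition vsub (u w : vec) : vec := vadd u (vscale (-1) w).

Definition ip (u w : vec) : R := - v1 u * v1 w + v2 u * v2 w + v3 u * v3 w.

Definition lightlike (u : vec) : Prop := u <> vzero /\ ip u u = 0.

Definition lin_indep2 (u w : vec) : Prop :=
  forall a b : R, vadd (vscale a u) (vscale b w) = vzero -> a = 0 /\ b = 0.

Definition open2 (U : R -> R -> Prop) : Prop :=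
  forall x y, U x y -> exists r, 0 < r /\
    forall x' y', Rabs (x' - x) < r -> Rabs (y' - y) < r -> U x' y'.

Definition cont2_on (U : R -> R -> Prop) (f : R -> R -> R) : Prop :=
  forall x y, U x y -> forall eps, 0 < eps -> exists delta, 0 < delta /\
    forall x' y', U x' y' -> Rabs (x' - x) < delta -> Rabs (y' - y) < delta ->
      Rabs (f x' y' - f x y) < eps.

Fixpoint Ck2 (n : nat) (U : R -> R -> Prop) (f : R -> R -> R) : Prop :=
  match n with
  | O => cont2_on U f
  | S m => exists fx fy : R -> R -> R,
      (forall x y, U x y ->
         derivable_pt_lim (fun t => f t y) x (fx x y) /\
         derivable_pt_lim (fun t => f x t) y (fy x y)) /\
      Ck2 m U fx /\ Ck2 m U fy
  end.

Definition smooth2 (U : R -> R -> Prop) (f : R -> R -> R) : Prop :=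
  forall n, Ck2 n U f.

Definition cont1_on (I : R -> Prop) (g : R -> R) : Prop :=
  forall x, I x -> forall eps, 0 < eps -> exists delta, 0 < delta /\
    forall x', I x' -> Rabs (x' - x) < delta -> Rabs (g x' - g x) < eps.

Fixpoint Ck1 (n : nat) (I : R -> Prop) (g : R -> R) : Prop :=
  match n with
  | O => cont1_on I g
  | S m => exists g' : R -> R,
      (forall x, I x -> derivable_pt_lim g x (g' x)) /\ Ck1 m I g'
  end.

Definition smooth1 (I : R -> Prop) (g : R -> R) : Prop := forall n, Ck1 n I g.

Definition smooth_vec2 (U : R -> R -> Prop) (phi : R -> R -> vec) : Prop :=
  smooth2 U (fun x y => v1 (phi x y)) /\ smooth2 U (fun x y => v2 (phi x y)) /\
  smooth2 U (fun x y => v3 (phi x y)).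

Definition smooth_vec1 (I : R -> Prop) (c : R -> vec) : Prop :=
  smooth1 I (fun x => v1 (c x)) /\ smooth1 I (fun x => v2 (c x)) /\
  smooth1 I (fun x => v3 (c x)).

Definition is_deriv_vec1 (I : R -> Prop) (c dc : R -> vec) : Prop :=
  forall x, I x ->
    derivable_pt_lim (fun t => v1 (c t)) x (v1 (dc x)) /\
    derivable_pt_lim (fun t => v2 (c t)) x (v2 (dc x)) /\
    derivable_pt_lim (fun t => v3 (c t)) x (v3 (dc x)).

Definition is_partials (U : R -> R -> Prop) (phi phix phiy : R -> R -> vec) : Prop :=
  forall x y, U x y ->
    derivable_pt_lim (fun t => v1 (phi t y)) x (v1 (phix x y)) /\
    derivable_pt_lim (fun t => v2 (phi t y)) x (v2 (phix x y)) /\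
    derivable_pt_lim (fun t => v3 (phi t y)) x (v3 (phix x y)) /\
    derivable_pt_lim (fun t => v1 (phi x t)) y (v1 (phiy x y)) /\
    derivable_pt_lim (fun t => v2 (phi x t)) y (v2 (phiy x y)) /\
    derivable_pt_lim (fun t => v3 (phi x t)) y (v3 (phiy x y)).

(* Induced metric on span(a,b): [[E,F],[F,G]]; a nondegenerate symmetric 2x2
   form has signature (1,1) iff its determinant is negative. *)
Definition timelike_plane (a b : vec) : Prop :=
  ip a a * ip b b - ip a b * ip a b < 0.

(* Tangential part Z^T of Z w.r.t. the (nondegenerate) tangent plane span(a,b):
   the unique Z^T = c a + d b with <Z - Z^T, a> = <Z - Z^T, b> = 0,
   given by Cramer's rule. *)
Definition tangential_part (Z a b : vec) : vec :=
  let E := ip a a in let F := ip a b in let G := ip b b in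
  let D := E * G - F * F in
  let c := (G * ip Z a - F * ip Z b) / D in
  let d := (E * ip Z b - F * ip Z a) / D in
  vadd (vscale c a) (vscale d b).

Definition timelike_surface (U : R -> R -> Prop) (phi phix phiy : R -> R -> vec) : Prop :=
  open2 U /\ smooth_vec2 U phi /\ is_partials U phi phix phiy /\
  (forall x y, U x y -> lin_indep2 (phix x y) (phiy x y)) /\
  (forall x y, U x y -> timelike_plane (phix x y) (phiy x y)).

Definition canonical_null_direction (U : R -> R -> Prop) (phix phiy : R -> R -> vec)
  (Z : vec) : Prop :=
  forall x y, U x y -> lightlike (tangential_part Z (phix x y) (phiy x y)).

(* Main.v *)
Require Import Defs.
From Stdlib Require Import Reals Lra ClassicalEpsilon FunctionalExtensionality.
From Coquelicot Require Import Coquelicot.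
Open Scope R_scope.


Lemma mvt_abs (f f' : R -> R) x x' :
  (forall t, Rabs (t - x) <= Rabs (x' - x) -> derivable_pt_lim f t (f' t)) ->
  exists c, Rabs (c - x) <= Rabs (x' - x) /\ f x' - f x = f' c * (x' - x).
Proof.
  intros H.
  destruct (Rtotal_order x x') as [Hl|[He|Hg]].
  - destruct (MVT_cor2 f f' x x' Hl) as [c [Hc1 Hc2]].
    + intros c Hc; apply H. rewrite !Rabs_right by lra. lra.
    + exists c; split; [rewrite !Rabs_right by lra; lra | lra].
  - subst; exists x'; split; [right; reflexivity| ring].
  - destruct (MVT_cor2 f f' x' x Hg) as [c [Hc1 Hc2]].
    + intros c Hc; apply H. rewrite !Rabs_left1 by lra. lra.
    + exists c; split; [rewrite !Rabs_left1 by lra; lra | lra].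
Qed.

Lemma diff_of_partials f fx fy x y r : 0 < r ->
  (forall u v, Rabs (u - x) < r -> Rabs (v - y) < r ->
     derivable_pt_lim (fun t => f t v) u (fx u v) /\
     derivable_pt_lim (fun t => f u t) v (fy u v)) ->
  continuity_2d_pt fx x y -> continuity_2d_pt fy x y ->
  differentiable_pt_lim f x y (fx x y) (fy x y).
Proof.
  intros Hr Hd Cx Cy eps.
  destruct (Cx (pos_div_2 eps)) as [d1 H1].
  destruct (Cy (pos_div_2 eps)) as [d2 H2].
  assert (Hd0 : 0 < Rmin r (Rmin d1 d2)).
  { apply Rmin_pos; [lra| apply Rmin_pos; apply cond_pos]. }
  exists (mkposreal _ Hd0). simpl. intros u v Hu Hv.
  assert (Hu1 : Rabs (u - x) < r) by (eapply Rlt_le_trans; [exact Hu| apply Rmin_l]).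
  assert (Hv1 : Rabs (v - y) < r) by (eapply Rlt_le_trans; [exact Hv| apply Rmin_l]).
  assert (Hu2 : Rabs (u - x) < d1) by (eapply Rlt_le_trans; [exact Hu| eapply Rle_trans; [apply Rmin_r| apply Rmin_l]]).
  assert (Hv2 : Rabs (v - y) < d1) by (eapply Rlt_le_trans; [exact Hv| eapply Rle_trans; [apply Rmin_r| apply Rmin_l]]).
  assert (Hu3 : Rabs (u - x) < d2) by (eapply Rlt_le_trans; [exact Hu| eapply Rle_trans; [apply Rmin_r| apply Rmin_r]]).
  assert (Hv3 : Rabs (v - y) < d2) by (eapply Rlt_le_trans; [exact Hv| eapply Rle_trans; [apply Rmin_r| apply Rmin_r]]).
  destruct (mvt_abs (fun t => f t v) (fun t => fx t v) x u) as [c [Hc Ec]].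
  { intros t Ht. apply (proj1 (Hd t v ltac:(lra) Hv1)). }
  destruct (mvt_abs (fun t => f x t) (fun t => fy x t) y v) as [c' [Hc' Ec']].
  { intros t Ht. apply (proj2 (Hd x t ltac:(rewrite Rminus_eq_0, Rabs_R0; lra) ltac:(lra))). }
  simpl in Ec, Ec'.
  assert (E: f u v - f x y - (fx x y * (u - x) + fy x y * (v - y)) =
     (fx c v - fx x y) * (u - x) + (fy x c' - fy x y) * (v - y)) by lra.
  rewrite E.
  assert (K1 : Rabs (fx c v - fx x y) < eps / 2) by (apply H1; lra).
  assert (K2 : Rabs (fy x c' - fy x y) < eps / 2)
    by (apply H2; [rewrite Rminus_eq_0, Rabs_R0; apply cond_pos| lra]).
  eapply Rle_trans; [apply Rabs_triang|]. rewrite !Rabs_mult.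
  assert (M1 := Rmax_l (Rabs (u - x)) (Rabs (v - y))).
  assert (M2 := Rmax_r (Rabs (u - x)) (Rabs (v - y))).
  assert (P1 := Rabs_pos (u - x)). assert (P2 := Rabs_pos (v - y)).
  assert (P3 := Rabs_pos (fx c v - fx x y)). assert (P4 := Rabs_pos (fy x c' - fy x y)).
  apply Rle_trans with (eps/2 * Rmax (Rabs (u - x)) (Rabs (v - y)) + eps/2 * Rmax (Rabs (u - x)) (Rabs (v - y))).
  - apply Rplus_le_compat.
    + apply Rle_trans with (eps/2 * Rabs (u-x)); [apply Rmult_le_compat_r; lra|].
      apply Rmult_le_compat_l; [destruct eps; simpl; lra| lra].
    + apply Rle_trans with (eps/2 * Rabs (v-y)); [apply Rmult_le_compat_r; lra|].
      apply Rmult_le_compat_l; [destruct eps; simpl; lra| lra].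
  - lra.
Qed.

Lemma cont2_on_pt U f x y : open2 U -> cont2_on U f -> U x y -> continuity_2d_pt f x y.
Proof.
  intros HO HC Hxy eps.
  destruct (HO x y Hxy) as [r [Hr HU]].
  destruct (HC x y Hxy eps (cond_pos eps)) as [d [Hd Hf]].
  assert (H0 : 0 < Rmin r d) by (apply Rmin_pos; lra).
  exists (mkposreal _ H0). simpl. intros u v Hu Hv.
  apply Hf.
  - apply HU; eapply Rlt_le_trans; eauto; apply Rmin_l.
  - eapply Rlt_le_trans; eauto; apply Rmin_r.
  - eapply Rlt_le_trans; eauto; apply Rmin_r.
Qed.


Lemma dpl_plus f g x a b : derivable_pt_lim f x a -> derivable_pt_lim g x b ->
  derivable_pt_lim (fun t => f t + g t) x (a + b).
Proof. intros; apply (derivable_pt_lim_plus f g); auto. Qed.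
Lemma dpl_mult f g x a b : derivable_pt_lim f x a -> derivable_pt_lim g x b ->
  derivable_pt_lim (fun t => f t * g t) x (a * g x + f x * b).
Proof. intros; apply (derivable_pt_lim_mult f g); auto. Qed.
Lemma dpl_const c x : derivable_pt_lim (fun _ => c) x 0.
Proof. apply (derivable_pt_lim_const c). Qed.
Lemma dpl_id x : derivable_pt_lim (fun t => t) x 1.
Proof. apply derivable_pt_lim_id. Qed.
Lemma dpl_inv f x a : derivable_pt_lim f x a -> f x <> 0 ->
  derivable_pt_lim (fun t => / f t) x (- a / f x ^ 2).
Proof. intros H H0. apply is_derive_Reals. apply is_derive_inv; auto. now apply is_derive_Reals. Qed.
Lemma dpl_eq f x a b : derivable_pt_lim f x a -> a = b -> derivable_pt_lim f x b.
Proof. intros H ->; exact H. Qed.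

Lemma dpl_cont f x a : derivable_pt_lim f x a -> continuity_pt f x.
Proof. intros H. apply derivable_continuous_pt. exists a; exact H. Qed.

Lemma cont2_restrict U V f : cont2_on U f -> (forall x y, V x y -> U x y) -> cont2_on V f.
Proof.
  intros H HV x y Hxy eps He. destruct (H x y (HV _ _ Hxy) eps He) as [d [Hd Hf]].
  exists d; split; auto.
Qed.

Lemma Ck2_restrict n : forall U V f, Ck2 n U f -> (forall x y, V x y -> U x y) -> Ck2 n V f.
Proof.
  induction n; simpl; intros U V f H HV.
  - eapply cont2_restrict; eauto.
  - destruct H as [fx [fy [Hd [H1 H2]]]]. exists fx, fy. split; [|split].
    + intros; apply Hd; auto.
    + eapply IHn; eauto.
    + eapply IHn; eauto.
Qed.

Lemma open_slice1 U x y : open2 U -> U x y -> exists r, 0 < r /\ forall z, x - r < z < x + r -> U z y.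
Proof.
  intros HO H. destruct (HO x y H) as [r [Hr HU]]. exists r; split; auto.
  intros z Hz; apply HU; [apply Rabs_def1; lra| rewrite Rminus_eq_0, Rabs_R0; lra].
Qed.
Lemma open_slice2 U x y : open2 U -> U x y -> exists r, 0 < r /\ forall z, y - r < z < y + r -> U x z.
Proof.
  intros HO H. destruct (HO x y H) as [r [Hr HU]]. exists r; split; auto.
  intros z Hz; apply HU; [rewrite Rminus_eq_0, Rabs_R0; lra| apply Rabs_def1; lra].
Qed.

Lemma dpl_ext_open1 U f g x y l : open2 U -> U x y -> (forall a b, U a b -> f a b = g a b) ->
  derivable_pt_lim (fun t => f t y) x l -> derivable_pt_lim (fun t => g t y) x l.
Proof.
  intros HO H E D. destruct (open_slice1 U x y HO H) as [r [Hr Hs]].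
  apply (derivable_pt_lim_locally_ext (fun t => f t y) _ x (x - r) (x + r)); [lra| |auto].
  intros z Hz; apply E, Hs; auto.
Qed.
Lemma dpl_ext_open2 U f g x y l : open2 U -> U x y -> (forall a b, U a b -> f a b = g a b) ->
  derivable_pt_lim (fun t => f x t) y l -> derivable_pt_lim (fun t => g x t) y l.
Proof.
  intros HO H E D. destruct (open_slice2 U x y HO H) as [r [Hr Hs]].
  apply (derivable_pt_lim_locally_ext (fun t => f x t) _ y (y - r) (y + r)); [lra| |auto].
  intros z Hz; apply E, Hs; auto.
Qed.

Lemma Ck2_ext n : forall U f g, open2 U -> (forall x y, U x y -> f x y = g x y) ->
  Ck2 n U f -> Ck2 n U g.
Proof.
  induction n; simpl; intros U f g HO E H.
  - intros x y Hxy eps He. destruct (H x y Hxy eps He) as [d [Hd Hf]].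
    exists d; split; auto. intros x' y' H' ? ?. rewrite <- !E; auto.
  - destruct H as [fx [fy [Hd [H1 H2]]]]. exists fx, fy; repeat split; auto.
    + eapply dpl_ext_open1; eauto. apply Hd; auto.
    + eapply dpl_ext_open2; eauto. apply Hd; auto.
Qed.

Lemma cont2_of_pt U f : (forall x y, U x y -> continuity_2d_pt f x y) -> cont2_on U f.
Proof.
  intros H x y Hxy eps He. destruct (H x y Hxy (mkposreal _ He)) as [d Hd].
  exists d; split; [apply cond_pos|]. intros; apply Hd; auto.
Qed.

Lemma Ck2_cont n : forall U f, open2 U -> Ck2 n U f -> cont2_on U f.
Proof.
  induction n; simpl; intros U f HO H; auto.
  destruct H as [fx [fy [Hd [H1 H2]]]].
  apply cont2_of_pt. intros x y Hxy.
  apply differentiable_continuity_pt. exists (fx x y), (fy x y).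
  destruct (HO x y Hxy) as [r [Hr HU]].
  apply (diff_of_partials f fx fy x y r Hr).
  - intros; apply Hd; auto.
  - eapply cont2_on_pt; eauto.
  - eapply cont2_on_pt; eauto.
Qed.

Lemma Ck2_diff U f fx fy x y : open2 U -> U x y ->
  (forall x y, U x y -> derivable_pt_lim (fun t => f t y) x (fx x y) /\
                        derivable_pt_lim (fun t => f x t) y (fy x y)) ->
  cont2_on U fx -> cont2_on U fy ->
  differentiable_pt_lim f x y (fx x y) (fy x y).
Proof.
  intros HO Hxy Hd C1 C2. destruct (HO x y Hxy) as [r [Hr HU]].
  apply (diff_of_partials f fx fy x y r Hr).
  - intros; apply Hd; auto.
  - eapply cont2_on_pt; eauto.
  - eapply cont2_on_pt; eauto.
Qed.

Lemma Ck2_mono n : forall U f, open2 U -> Ck2 (S n) U f -> Ck2 n U f.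
Proof.
  induction n; intros U f HO H.
  - eapply Ck2_cont; eauto.
  - destruct H as [fx [fy [Hd [H1 H2]]]]. exists fx, fy; repeat split; auto.
    + apply Hd; auto.
    + apply Hd; auto.
Qed.

Lemma Ck2_le m n : (m <= n)%nat -> forall U f, open2 U -> Ck2 n U f -> Ck2 m U f.
Proof.
  induction 1; intros U f HO Hc; auto. apply IHle; auto. apply Ck2_mono; auto.
Qed.

Lemma Ck2_const n U : forall c, Ck2 n U (fun _ _ => c).
Proof.
  induction n; simpl; intros c.
  - intros x y _ eps He. exists 1; split; [lra|]. intros. rewrite Rminus_eq_0, Rabs_R0; lra.
  - exists (fun _ _ => 0), (fun _ _ => 0). split; [intros; split; apply dpl_const| split; apply IHn].
Qed.

Lemma Ck2_proj1 n U : Ck2 n U (fun x _ => x).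
Proof.
  destruct n; simpl.
  - intros x y _ eps He. exists eps; split; auto.
  - exists (fun _ _ => 1), (fun _ _ => 0). split; [intros; split; [apply dpl_id| apply dpl_const]| split; apply Ck2_const].
Qed.

Lemma Ck2_proj2 n U : Ck2 n U (fun _ y => y).
Proof.
  destruct n; simpl.
  - intros x y _ eps He. exists eps; split; auto.
  - exists (fun _ _ => 0), (fun _ _ => 1). split; [intros; split; [apply dpl_const| apply dpl_id]| split; apply Ck2_const].
Qed.

Lemma cont2_plus U f g : cont2_on U f -> cont2_on U g -> cont2_on U (fun x y => f x y + g x y).
Proof.
  intros Hf Hg x y Hxy eps He.
  destruct (Hf x y Hxy (eps/2)) as [d1 [Hd1 H1]]; [lra|].
  destruct (Hg x y Hxy (eps/2)) as [d2 [Hd2 H2]]; [lra|].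
  exists (Rmin d1 d2); split; [apply Rmin_pos; auto|].
  intros x' y' H' Hx Hy.
  assert (A1 := H1 x' y' H' (Rlt_le_trans _ _ _ Hx (Rmin_l _ _)) (Rlt_le_trans _ _ _ Hy (Rmin_l _ _))).
  assert (A2 := H2 x' y' H' (Rlt_le_trans _ _ _ Hx (Rmin_r _ _)) (Rlt_le_trans _ _ _ Hy (Rmin_r _ _))).
  replace (f x' y' + g x' y' - (f x y + g x y)) with ((f x' y' - f x y) + (g x' y' - g x y)) by ring.
  eapply Rle_lt_trans; [apply Rabs_triang| lra].
Qed.

Lemma Ck2_plus n : forall U f g, Ck2 n U f -> Ck2 n U g -> Ck2 n U (fun x y => f x y + g x y).
Proof.
  induction n; simpl; intros U f g Hf Hg.
  - apply cont2_plus; auto.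
  - destruct Hf as [fx [fy [Hdf [F1 F2]]]]. destruct Hg as [gx [gy [Hdg [G1 G2]]]].
    exists (fun x y => fx x y + gx x y), (fun x y => fy x y + gy x y). repeat split; auto.
    + apply dpl_plus; [apply Hdf| apply Hdg]; auto.
    + apply dpl_plus; [apply Hdf| apply Hdg]; auto.
Qed.

Lemma cont2_comp U V f G1 G2 : cont2_on V f -> cont2_on U G1 -> cont2_on U G2 ->
  (forall x y, U x y -> V (G1 x y) (G2 x y)) ->
  cont2_on U (fun x y => f (G1 x y) (G2 x y)).
Proof.
  intros Hf H1 H2 HG x y Hxy eps He.
  destruct (Hf _ _ (HG x y Hxy) eps He) as [d [Hd Hfd]].
  destruct (H1 x y Hxy d Hd) as [d1 [Hd1 K1]].
  destruct (H2 x y Hxy d Hd) as [d2 [Hd2 K2]].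
  exists (Rmin d1 d2); split; [apply Rmin_pos; auto|].
  intros x' y' H' Hx Hy. apply Hfd; auto.
  - apply K1; auto; eapply Rlt_le_trans; eauto; apply Rmin_l.
  - apply K2; auto; eapply Rlt_le_trans; eauto; apply Rmin_r.
Qed.

Lemma cont2_mult U f g : cont2_on U f -> cont2_on U g -> cont2_on U (fun x y => f x y * g x y).
Proof.
  intros Hf Hg.
  apply (cont2_comp U (fun _ _ => True) (fun a b => a * b) f g); auto.
  intros a b _ eps He.
  assert (Hc : continuity_2d_pt (fun a b => a * b) a b).
  { apply continuity_2d_pt_mult; [apply continuity_2d_pt_id1| apply continuity_2d_pt_id2]. }
  destruct (Hc (mkposreal _ He)) as [d Hd]. exists d; split; [apply cond_pos|].
  intros; apply Hd; auto.
Qed.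

Lemma Ck2_mult n : forall U f g, open2 U -> Ck2 n U f -> Ck2 n U g -> Ck2 n U (fun x y => f x y * g x y).
Proof.
  induction n; intros U f g HO Hf Hg.
  - apply cont2_mult; auto.
  - assert (Hf' := Ck2_mono _ _ _ HO Hf). assert (Hg' := Ck2_mono _ _ _ HO Hg).
    destruct Hf as [fx [fy [Hdf [F1 F2]]]]. destruct Hg as [gx [gy [Hdg [G1 G2]]]].
    exists (fun x y => fx x y * g x y + f x y * gx x y), (fun x y => fy x y * g x y + f x y * gy x y).
    repeat split.
    + apply (dpl_mult (fun t => f t y) (fun t => g t y)); [apply Hdf| apply Hdg]; auto.
    + apply (dpl_mult (fun t => f x t) (fun t => g x t)); [apply Hdf| apply Hdg]; auto.
    + apply Ck2_plus; apply IHn; auto.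
    + apply Ck2_plus; apply IHn; auto.
Qed.

Lemma cont2_inv U f : cont2_on U f -> (forall x y, U x y -> f x y <> 0) -> cont2_on U (fun x y => / f x y).
Proof.
  intros Hf Hn.
  apply (cont2_comp U (fun a _ => a <> 0) (fun a _ => / a) f (fun _ _ => 0)); auto.
  - intros a b Ha eps He.
    assert (Hc : continuity_2d_pt (fun a _ => / a) a b).
    { apply (continuity_2d_pt_inv (fun u _ => u)); auto; apply continuity_2d_pt_id1. }
    destruct (Hc (mkposreal _ He)) as [d Hd]. exists d; split; [apply cond_pos|].
    intros x1 y1 _ Hx1 Hy1; apply (Hd x1 y1); auto.
  - intros a b _ eps He. exists 1; split; [lra|]; intros; rewrite Rminus_eq_0, Rabs_R0; lra.
Qed.

Lemma Ck2_inv n : forall U f, open2 U -> (forall x y, U x y -> f x y <> 0) ->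
  Ck2 n U f -> Ck2 n U (fun x y => / f x y).
Proof.
  induction n; intros U f HO Hn Hf.
  - apply cont2_inv; auto.
  - assert (Hf' := Ck2_mono _ _ _ HO Hf).
    assert (Hi := IHn _ _ HO Hn Hf').
    destruct Hf as [fx [fy [Hdf [F1 F2]]]].
    exists (fun x y => (-1) * fx x y * ((/ f x y) * (/ f x y))),
           (fun x y => (-1) * fy x y * ((/ f x y) * (/ f x y))).
    repeat split.
    + eapply dpl_eq; [apply (dpl_inv (fun t => f t y)); [apply Hdf; auto| apply Hn; auto]|].
      field. apply Hn; auto.
    + eapply dpl_eq; [apply (dpl_inv (fun t => f x t)); [apply Hdf; auto| apply Hn; auto]|].
      field. apply Hn; auto.
    + apply Ck2_mult; auto; [apply Ck2_mult; auto; apply Ck2_const| apply Ck2_mult; auto].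
    + apply Ck2_mult; auto; [apply Ck2_mult; auto; apply Ck2_const| apply Ck2_mult; auto].
Qed.

Lemma Ck2_comp n : forall U V f G1 G2, open2 U -> open2 V ->
  Ck2 n V f -> Ck2 n U G1 -> Ck2 n U G2 ->
  (forall x y, U x y -> V (G1 x y) (G2 x y)) ->
  Ck2 n U (fun x y => f (G1 x y) (G2 x y)).
Proof.
  induction n; intros U V f G1 G2 HU HV Hf H1 H2 HG.
  - eapply cont2_comp; eauto.
  - assert (H1' := Ck2_mono _ _ _ HU H1). assert (H2' := Ck2_mono _ _ _ HU H2).
    destruct Hf as [fx [fy [Hdf [F1 F2]]]].
    destruct H1 as [ax [ay [Hda [A1 A2]]]]. destruct H2 as [bx [by' [Hdb [B1 B2]]]].
    assert (Dif : forall x y, U x y -> differentiable_pt_lim f (G1 x y) (G2 x y)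
                    (fx (G1 x y) (G2 x y)) (fy (G1 x y) (G2 x y))).
    { intros x y Hxy. apply (Ck2_diff V); auto; eapply Ck2_cont; eauto. }
    exists (fun x y => fx (G1 x y) (G2 x y) * ax x y + fy (G1 x y) (G2 x y) * bx x y),
           (fun x y => fx (G1 x y) (G2 x y) * ay x y + fy (G1 x y) (G2 x y) * by' x y).
    repeat split.
    + apply (derivable_pt_lim_comp_2d f (fun t => G1 t y) (fun t => G2 t y)); auto;
       [apply Hda| apply Hdb]; auto.
    + apply (derivable_pt_lim_comp_2d f (fun t => G1 x t) (fun t => G2 x t)); auto;
       [apply Hda| apply Hdb]; auto.
    + apply Ck2_plus; apply Ck2_mult; auto; eapply IHn; eauto.
    + apply Ck2_plus; apply Ck2_mult; auto; eapply IHn; eauto.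
Qed.


Lemma sm_const U c : smooth2 U (fun _ _ => c).
Proof. intro n; apply Ck2_const. Qed.
Lemma sm_proj1 U : smooth2 U (fun x _ => x).
Proof. intro n; apply Ck2_proj1. Qed.
Lemma sm_proj2 U : smooth2 U (fun _ y => y).
Proof. intro n; apply Ck2_proj2. Qed.
Lemma sm_plus U f g : smooth2 U f -> smooth2 U g -> smooth2 U (fun x y => f x y + g x y).
Proof. intros H1 H2 n; apply Ck2_plus; auto. Qed.
Lemma sm_mult U f g : open2 U -> smooth2 U f -> smooth2 U g -> smooth2 U (fun x y => f x y * g x y).
Proof. intros HO H1 H2 n; apply Ck2_mult; auto. Qed.
Lemma sm_inv U f : open2 U -> (forall x y, U x y -> f x y <> 0) -> smooth2 U f ->
  smooth2 U (fun x y => / f x y).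
Proof. intros HO Hn H n; apply Ck2_inv; auto. Qed.
Lemma sm_comp U V f G1 G2 : open2 U -> open2 V -> smooth2 V f -> smooth2 U G1 -> smooth2 U G2 ->
  (forall x y, U x y -> V (G1 x y) (G2 x y)) -> smooth2 U (fun x y => f (G1 x y) (G2 x y)).
Proof. intros; intro n; eapply Ck2_comp; eauto. Qed.
Lemma sm_restrict U V f : smooth2 U f -> (forall x y, V x y -> U x y) -> smooth2 V f.
Proof. intros H HV n; eapply Ck2_restrict; eauto. Qed.
Lemma sm_ext U f g : open2 U -> (forall x y, U x y -> f x y = g x y) -> smooth2 U f -> smooth2 U g.
Proof. intros HO E H n; eapply Ck2_ext; eauto. Qed.
Lemma sm_cont U f : open2 U -> smooth2 U f -> cont2_on U f.
Proof. intros HO H; apply (Ck2_cont 0); auto. Qed.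


Lemma sm_partials U f : open2 U -> smooth2 U f ->
  exists fx fy, (forall x y, U x y -> derivable_pt_lim (fun t => f t y) x (fx x y) /\
                                    derivable_pt_lim (fun t => f x t) y (fy x y)) /\
                smooth2 U fx /\ smooth2 U fy.
Proof.
  intros HO H. destruct (H 1%nat) as [fx [fy [Hd _]]].
  exists fx, fy; split; [exact Hd|]. split; intro n; destruct (H (S n)) as [gx [gy [Hg [G1 G2]]]].
  - apply (Ck2_ext n U gx fx HO); [|exact G1]. intros x y Hxy.
    eapply uniqueness_limite; [apply Hg| apply Hd]; auto.
  - apply (Ck2_ext n U gy fy HO); [|exact G2]. intros x y Hxy.
    eapply uniqueness_limite; [apply Hg| apply Hd]; auto.
Qed.

Lemma sm_diff U f fx fy x y : open2 U -> U x y ->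
  (forall x y, U x y -> derivable_pt_lim (fun t => f t y) x (fx x y) /\
                        derivable_pt_lim (fun t => f x t) y (fy x y)) ->
  smooth2 U fx -> smooth2 U fy -> differentiable_pt_lim f x y (fx x y) (fy x y).
Proof. intros; apply (Ck2_diff U); auto; apply sm_cont; auto. Qed.

Lemma Ck2_swap n : forall U f, Ck2 n U f -> Ck2 n (fun x y => U y x) (fun x y => f y x).
Proof.
  induction n; simpl; intros U f H.
  - intros x y Hxy eps He. destruct (H y x Hxy eps He) as [d [Hd Hf]].
    exists d; split; auto.
  - destruct H as [fx [fy [Hd [H1 H2]]]].
    exists (fun x y => fy y x), (fun x y => fx y x). split; [|split; apply IHn; auto].
    intros x y Hxy; split; apply Hd; auto.
Qed.
Lemma sm_swap U f : smooth2 U f -> smooth2 (fun x y => U y x) (fun x y => f y x).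
Proof. intros H n; apply Ck2_swap; auto. Qed.
Lemma open2_swap U : open2 U -> open2 (fun x y => U y x).
Proof. intros H x y Hxy. destruct (H y x Hxy) as [r [Hr HU]]. exists r; split; auto. Qed.

Lemma Ck2_slice n : forall U I f c, Ck2 n U f -> (forall x, I x -> U x c) -> Ck1 n I (fun x => f x c).
Proof.
  induction n; simpl; intros U I f c H HI.
  - intros x Hx eps He. destruct (H x c (HI x Hx) eps He) as [d [Hd Hf]].
    exists d; split; auto. intros x' Hx' Hxx. apply Hf; auto.
    rewrite Rminus_eq_0, Rabs_R0; lra.
  - destruct H as [fx [fy [Hd [H1 H2]]]]. exists (fun x => fx x c). split.
    + intros x Hx. apply (Hd x c (HI x Hx)).
    + eapply IHn; eauto.
Qed.
Lemma sm_slice U I f c : smooth2 U f -> (forall x, I x -> U x c) -> smooth1 I (fun x => f x c).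
Proof. intros H HI n; eapply Ck2_slice; eauto. Qed.

Lemma Ck1_lift n : forall (I : R -> Prop) (U : R -> R -> Prop) m, Ck1 n I m -> (forall x y, U x y -> I x) ->
  Ck2 n U (fun x _ => m x).
Proof.
  induction n; simpl; intros I U m H HU.
  - intros x y Hxy eps He. destruct (H x (HU x y Hxy) eps He) as [d [Hd Hf]].
    exists d; split; auto. intros x' y' H' ? ?. apply Hf; eauto.
  - destruct H as [m' [Hd H1]]. exists (fun x _ => m' x), (fun _ _ => 0).
    split; [|split; [eapply IHn; eauto| apply Ck2_const]].
    intros x y Hxy; split; [apply Hd; eauto| apply dpl_const].
Qed.
Lemma sm_lift (I : R -> Prop) (U : R -> R -> Prop) m : smooth1 I m -> (forall x y, U x y -> I x) ->
  smooth2 U (fun x _ => m x).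
Proof. intros H HU n; eapply Ck1_lift; eauto. Qed.

Lemma smooth1_of_deriv (I : R -> Prop) g g' : (forall x, I x -> derivable_pt_lim g x (g' x)) ->
  smooth1 I g' -> smooth1 I g.
Proof.
  intros Hd H n. destruct n; simpl.
  - intros x Hx eps He. destruct (dpl_cont g x _ (Hd x Hx) eps He) as [d [Hd0 Hf]].
    exists d; split; auto. intros x' Hx' Hxx.
    destruct (Req_dec x' x) as [->|Hne]; [rewrite Rminus_eq_0, Rabs_R0; lra|].
    apply (Hf x'). split; [split; [constructor| auto]| exact Hxx].
  - exists g'; split; auto.
Qed.


Lemma lim_quot (A B : R -> R -> R) a1 a2 b1 b2 (Q : R -> R) :
  continuity_2d_pt A a1 a2 -> continuity_2d_pt B b1 b2 -> B b1 b2 <> 0 ->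
  (forall d, 0 < d -> exists e, 0 < e /\ forall h, h <> 0 -> Rabs h < e ->
     exists x1 x2 y1 y2, Rabs (x1 - a1) < d /\ Rabs (x2 - a2) < d /\
       Rabs (y1 - b1) < d /\ Rabs (y2 - b2) < d /\ Q h = A x1 x2 / B y1 y2) ->
  forall eps, 0 < eps -> exists e : posreal, forall h, h <> 0 -> Rabs h < e ->
     Rabs (Q h - A a1 a2 / B b1 b2) < eps.
Proof.
  intros CA CB Bn Hap eps He.
  assert (Cd : continuity_2d_pt (fun u v => u * / v) (A a1 a2) (B b1 b2)).
  { apply continuity_2d_pt_mult; [apply continuity_2d_pt_id1|].
    apply (continuity_2d_pt_inv (fun _ v => v)); auto. apply continuity_2d_pt_id2. }
  destruct (Cd (mkposreal _ He)) as [eta Heta].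
  destruct (CA eta) as [dA HA]. destruct (CB eta) as [dB HB].
  assert (Hd : 0 < Rmin dA dB) by (apply Rmin_pos; apply cond_pos).
  destruct (Hap _ Hd) as [e [He0 He1]].
  exists (mkposreal _ He0). simpl. intros h Hh Hhe.
  destruct (He1 h Hh Hhe) as [x1 [x2 [y1 [y2 [L1 [L2 [L3 [L4 EQ]]]]]]]].
  rewrite EQ. unfold Rdiv. apply (Heta (A x1 x2) (B y1 y2)).
  - apply HA; eapply Rlt_le_trans; eauto; apply Rmin_l.
  - apply HB; eapply Rlt_le_trans; eauto; apply Rmin_r.
Qed.

Lemma open_preimage D O f1 f2 : open2 D -> open2 O -> cont2_on D f1 -> cont2_on D f2 ->
  open2 (fun x y => D x y /\ O (f1 x y) (f2 x y)).
Proof.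
  intros HD HO C1 C2 x y [Hxy Ho].
  destruct (HD x y Hxy) as [r0 [Hr0 HD0]].
  destruct (HO _ _ Ho) as [r [Hr HO0]].
  destruct (C1 x y Hxy r Hr) as [d1 [Hd1 K1]].
  destruct (C2 x y Hxy r Hr) as [d2 [Hd2 K2]].
  exists (Rmin r0 (Rmin d1 d2)). split; [repeat apply Rmin_pos; auto|].
  intros x' y' Hx Hy.
  assert (M1 := Rmin_l r0 (Rmin d1 d2)); assert (M2 := Rmin_r r0 (Rmin d1 d2));
  assert (M3 := Rmin_l d1 d2); assert (M4 := Rmin_r d1 d2).
  assert (Hx0 : Rabs (x' - x) < r0) by lra.
  assert (Hy0 : Rabs (y' - y) < r0) by lra.
  assert (Hx1 : Rabs (x' - x) < d1) by lra.
  assert (Hy1 : Rabs (y' - y) < d1) by lra.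
  assert (Hx2 : Rabs (x' - x) < d2) by lra.
  assert (Hy2 : Rabs (y' - y) < d2) by lra.
  assert (D' : D x' y') by auto.
  split; [exact D'| apply HO0; auto].
Qed.

Lemma open_box a b e d : open2 (fun x y => Rabs (x - a) < e /\ Rabs (y - b) < d).
Proof.
  intros x y [H1 H2].
  exists (Rmin (e - Rabs (x - a)) (d - Rabs (y - b))). split.
  - apply Rmin_pos; lra.
  - intros x' y' Hx Hy.
    assert (Hx' := Rmin_l (e - Rabs (x - a)) (d - Rabs (y - b))).
    assert (Hy' := Rmin_r (e - Rabs (x - a)) (d - Rabs (y - b))).
    split.
    + replace (x' - a) with ((x' - x) + (x - a)) by ring.
      eapply Rle_lt_trans; [apply Rabs_triang| lra].
    + replace (y' - b) with ((y' - y) + (y - b)) by ring.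
      eapply Rle_lt_trans; [apply Rabs_triang| lra].
Qed.


Lemma abs_tri3 a b c : Rabs (a - c) <= Rabs (a - b) + Rabs (b - c).
Proof. replace (a - c) with ((a - b) + (b - c)) by ring. apply Rabs_triang. Qed.

Lemma dpl_of_quot f x (A B : R -> R -> R) a1 a2 b1 b2 :
  continuity_2d_pt A a1 a2 -> continuity_2d_pt B b1 b2 -> B b1 b2 <> 0 ->
  (forall d, 0 < d -> exists e, 0 < e /\ forall h, h <> 0 -> Rabs h < e ->
     exists x1 x2 y1 y2, Rabs (x1 - a1) < d /\ Rabs (x2 - a2) < d /\
       Rabs (y1 - b1) < d /\ Rabs (y2 - b2) < d /\ (f (x + h) - f x) / h = A x1 x2 / B y1 y2) ->
  derivable_pt_lim f x (A a1 a2 / B b1 b2).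
Proof.
  intros CA CB Bn Hap eps He.
  destruct (lim_quot A B a1 a2 b1 b2 (fun h => (f (x + h) - f x) / h) CA CB Bn Hap eps He) as [e He'].
  exists e; auto.
Qed.

Lemma ift_pos U F Ft Fp t0 p0 :
  open2 U -> U t0 p0 ->
  (forall t p, U t p -> derivable_pt_lim (fun s => F s p) t (Ft t p) /\
                        derivable_pt_lim (fun s => F t s) p (Fp t p)) ->
  smooth2 U F -> smooth2 U Ft -> smooth2 U Fp -> 0 < Ft t0 p0 ->
  exists eps dl r (K : R -> R -> R), 0 < eps /\ 0 < dl /\ 0 < r /\
   (forall t p, Rabs (t - t0) < r -> Rabs (p - p0) < dl -> U t p /\ Ft t p <> 0) /\
   (forall t p, Rabs (t - t0) < r -> Rabs (p - p0) < dl -> Rabs (F t p - F t0 p0) < eps ->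
       K (F t p) p = t) /\
   (forall z p, Rabs (z - F t0 p0) < eps -> Rabs (p - p0) < dl ->
       Rabs (K z p - t0) < r /\ F (K z p) p = z) /\
   smooth2 (fun z p => Rabs (z - F t0 p0) < eps /\ Rabs (p - p0) < dl) K.
Proof.
  intros HO H0 Hd SF SFt SFp Hpos.
  set (z0 := F t0 p0).
  set (m := Ft t0 p0 / 2).
  assert (Hm : 0 < m) by (unfold m; lra).
  assert (CFt := cont2_on_pt U Ft t0 p0 HO (sm_cont U Ft HO SFt) H0).
  destruct (CFt (mkposreal _ Hm)) as [da Hda]. simpl in Hda.
  destruct (HO t0 p0 H0) as [r0 [Hr0 HU0]].
  set (R0 := Rmin da r0).
  assert (HR0 : 0 < R0) by (apply Rmin_pos; [apply cond_pos| lra]).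
  assert (HR0a := Rmin_l da r0). assert (HR0b := Rmin_r da r0). fold R0 in HR0a, HR0b.
  assert (Box : forall t p, Rabs (t - t0) < R0 -> Rabs (p - p0) < R0 -> U t p /\ m < Ft t p).
  { intros t p Ht Hp. split; [apply HU0; lra|].
    assert (Hx := Hda t p ltac:(lra) ltac:(lra)). unfold m in *.
    apply Rabs_def2 in Hx. lra. }
  set (r := R0 / 4).
  assert (Hr : 0 < r) by (unfold r; lra).
  assert (Mono : forall p t1 t2, Rabs (p - p0) < R0 -> Rabs (t1 - t0) <= r -> Rabs (t2 - t0) <= r ->
             m * Rabs (t2 - t1) <= Rabs (F t2 p - F t1 p)).
  { intros p t1 t2 Hp H1 H2.
    destruct (mvt_abs (fun s => F s p) (fun s => Ft s p) t1 t2) as [c [Hc Ec]].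
    { intros t Ht. apply Hd. apply Box; auto.
      assert (T1 := abs_tri3 t t1 t0). assert (T2 := abs_tri3 t2 t0 t1).
      rewrite (Rabs_minus_sym t0 t1) in T2. unfold r in *; lra. }
    simpl in Ec. rewrite Ec, Rabs_mult.
    assert (Hc' : m < Ft c p).
    { apply Box; auto. assert (T1 := abs_tri3 c t1 t0). assert (T2 := abs_tri3 t2 t0 t1).
      rewrite (Rabs_minus_sym t0 t1) in T2. unfold r in *; lra. }
    rewrite (Rabs_right (Ft c p)) by lra.
    apply Rmult_le_compat_r; [apply Rabs_pos| lra]. }
  assert (Eplus : F (t0 + r) p0 - z0 >= m * r).
  { destruct (mvt_abs (fun s => F s p0) (fun s => Ft s p0) t0 (t0 + r)) as [c [Hc Ec]].
    { intros t Ht. apply Hd. apply Box; [|rewrite Rminus_eq_0, Rabs_R0; lra].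
      replace (t0 + r - t0) with r in Ht by ring. rewrite (Rabs_right r) in Ht by lra. unfold r in *; lra. }
    simpl in Ec. unfold z0. rewrite Ec. replace (t0 + r - t0) with r by ring.
    replace (t0 + r - t0) with r in Hc by ring. rewrite (Rabs_right r) in Hc by lra.
    assert (m < Ft c p0) by (apply Box; [unfold r in *; lra| rewrite Rminus_eq_0, Rabs_R0; lra]).
    apply Rle_ge, Rmult_le_compat_r; lra. }
  assert (Eminus : z0 - F (t0 - r) p0 >= m * r).
  { destruct (mvt_abs (fun s => F s p0) (fun s => Ft s p0) t0 (t0 - r)) as [c [Hc Ec]].
    { intros t Ht. apply Hd. apply Box; [|rewrite Rminus_eq_0, Rabs_R0; lra].
      replace (t0 - r - t0) with (- r) in Ht by ring. rewrite Rabs_Ropp, (Rabs_right r) in Ht by lra.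
      unfold r in *; lra. }
    simpl in Ec. unfold z0.
    replace (t0 - r - t0) with (- r) in Hc, Ec by ring. rewrite Rabs_Ropp, (Rabs_right r) in Hc by lra.
    assert (m < Ft c p0) by (apply Box; [unfold r in *; lra| rewrite Rminus_eq_0, Rabs_R0; lra]).
    assert (F t0 p0 - F (t0 - r) p0 = Ft c p0 * r) by lra.
    rewrite H1. apply Rle_ge, Rmult_le_compat_r; lra. }
  set (eps := m * r / 2).
  assert (Heps : 0 < eps) by (unfold eps; apply Rmult_lt_0_compat; [apply Rmult_lt_0_compat|]; lra).
  assert (CF := sm_cont U F HO SF).
  assert (Up : U (t0 + r) p0) by (apply HU0; [replace (t0 + r - t0) with r by ring; rewrite Rabs_right; unfold r in *; lra| rewrite Rminus_eq_0, Rabs_R0; lra]).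
  assert (Um : U (t0 - r) p0) by (apply HU0; [replace (t0 - r - t0) with (-r) by ring; rewrite Rabs_Ropp, Rabs_right; unfold r in *; lra| rewrite Rminus_eq_0, Rabs_R0; lra]).
  destruct (cont2_on_pt U F _ _ HO CF Up (mkposreal _ Heps)) as [db Hdb]. simpl in Hdb.
  destruct (cont2_on_pt U F _ _ HO CF Um (mkposreal _ Heps)) as [dc Hdc]. simpl in Hdc.
  set (dl := Rmin R0 (Rmin db dc)).
  assert (Hdl : 0 < dl) by (apply Rmin_pos; [lra| apply Rmin_pos; apply cond_pos]).
  assert (Hdla := Rmin_l R0 (Rmin db dc)). assert (Hdlb := Rmin_r R0 (Rmin db dc)).
  assert (Hdlc := Rmin_l db dc). assert (Hdld := Rmin_r db dc). fold dl in Hdla, Hdlb.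
  assert (Ends : forall p, Rabs (p - p0) < dl -> z0 + eps < F (t0 + r) p /\ F (t0 - r) p < z0 - eps).
  { intros p Hp.
    assert (A1 := Hdb (t0 + r) p ltac:(rewrite Rminus_eq_0, Rabs_R0; apply cond_pos) ltac:(lra)).
    assert (A2 := Hdc (t0 - r) p ltac:(rewrite Rminus_eq_0, Rabs_R0; apply cond_pos) ltac:(lra)).
    apply Rabs_def2 in A1. apply Rabs_def2 in A2. unfold eps in *. lra. }
  assert (Ex : forall z p, Rabs (z - z0) < eps -> Rabs (p - p0) < dl ->
             exists t, Rabs (t - t0) < r /\ F t p = z).
  { intros z p Hz Hp. destruct (Ends p Hp) as [E1 E2]. apply Rabs_def2 in Hz.
    destruct (Ranalysis5.IVT_interv (fun s => F s p - z) (t0 - r) (t0 + r)) as [t [Ht Eq]].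
    - intros a Ha. apply continuity_pt_minus; [|apply continuity_pt_const; intros ? ?; auto].
      apply (dpl_cont _ _ (Ft a p)). apply Hd. apply Box; [|lra].
      apply Rabs_def1; unfold r in *; lra.
    - lra.
    - simpl; lra.
    - simpl; lra.
    - simpl in Eq. exists t; split; [|lra].
      assert (t <> t0 - r) by (intro; subst; lra).
      assert (t <> t0 + r) by (intro; subst; lra).
      apply Rabs_def1; lra. }
  set (K := fun z p => epsilon (inhabits 0) (fun t => Rabs (t - t0) < r /\ F t p = z)).
  assert (KP : forall z p, Rabs (z - z0) < eps -> Rabs (p - p0) < dl ->
             Rabs (K z p - t0) < r /\ F (K z p) p = z).
  { intros z p Hz Hp. unfold K. apply (epsilon_spec (inhabits 0) (fun t => Rabs (t - t0) < r /\ F t p = z)).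
    apply Ex; auto. }
  assert (Uniq : forall p t1 t2, Rabs (p - p0) < dl -> Rabs (t1 - t0) < r -> Rabs (t2 - t0) < r ->
                 F t1 p = F t2 p -> t1 = t2).
  { intros p t1 t2 Hp H1 H2 E. assert (Mo := Mono p t1 t2 ltac:(lra) ltac:(lra) ltac:(lra)).
    rewrite E, Rminus_eq_0, Rabs_R0 in Mo.
    assert (Rabs (t2 - t1) <= 0) by (apply Rmult_le_reg_l with m; lra).
    assert (Rabs (t2 - t1) = 0) by (assert (X := Rabs_pos (t2 - t1)); lra).
    apply Rabs_eq_0 in H3. lra. }
  set (O := fun z p => Rabs (z - z0) < eps /\ Rabs (p - p0) < dl).
  assert (CK : cont2_on O K).
  { intros z p [Hz Hp] e He.
    destruct (KP z p Hz Hp) as [Kr KF].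
    assert (UK : U (K z p) p) by (apply Box; unfold r in *; lra).
    destruct (cont2_on_pt U F _ _ HO CF UK (mkposreal (m * e / 2) ltac:(apply Rmult_lt_0_compat; [apply Rmult_lt_0_compat|]; lra))) as [d1 Hd1].
    simpl in Hd1.
    exists (Rmin d1 (m * e / 2)). split; [apply Rmin_pos; [apply cond_pos| apply Rmult_lt_0_compat; [apply Rmult_lt_0_compat|]; lra]|].
    intros z' p' [Hz' Hp'] Hzz Hpp.
    assert (M1 := Rmin_l d1 (m * e / 2)). assert (M2 := Rmin_r d1 (m * e / 2)).
    destruct (KP z' p' Hz' Hp') as [Kr' KF'].
    assert (Mo := Mono p' (K z p) (K z' p') ltac:(lra) ltac:(lra) ltac:(lra)).
    rewrite KF' in Mo.
    assert (A1 := Hd1 (K z p) p' ltac:(rewrite Rminus_eq_0, Rabs_R0; apply cond_pos) ltac:(lra)).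
    rewrite KF in A1.
    assert (A2 : Rabs (z' - F (K z p) p') < m * e).
    { replace (z' - F (K z p) p') with ((z' - z) - (F (K z p) p' - z)) by ring.
      eapply Rle_lt_trans; [apply Rabs_triang|]. rewrite Rabs_Ropp. lra. }
    apply Rmult_lt_reg_l with m; lra. }
  assert (CK2 : forall z p, O z p -> continuity_2d_pt K z p).
  { intros z p Hzp; apply (cont2_on_pt O K z p); auto; unfold O; apply open_box. }
  set (Kz := fun z p => 1 / Ft (K z p) p).
  set (Kp := fun z p => - Fp (K z p) p / Ft (K z p) p).
  assert (CFt' := sm_cont U Ft HO SFt).
  assert (CFp' := sm_cont U Fp HO SFp).
  assert (DK : forall z p, O z p -> derivable_pt_lim (fun s => K s p) z (Kz z p) /\
                                  derivable_pt_lim (fun s => K z s) p (Kp z p)).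
  { intros z p [Hz Hp]. destruct (KP z p Hz Hp) as [Kr KF].
    set (k := K z p) in *.
    assert (Bk : U k p /\ m < Ft k p) by (apply Box; unfold r in *; lra).
    split.
    - unfold Kz. fold k.
      apply (dpl_of_quot _ _ (fun _ _ => 1) Ft k p k p).
      + apply continuity_2d_pt_const.
      + eapply cont2_on_pt; eauto; apply Bk.
      + lra.
      + intros d Hd0.
        destruct (CK z p (conj Hz Hp) d Hd0) as [d1 [Hd1 Kc]].
        exists (Rmin d1 (eps - Rabs (z - z0))). split; [apply Rmin_pos; lra|].
        intros h Hh Hhe.
        assert (M1 := Rmin_l d1 (eps - Rabs (z - z0))). assert (M2 := Rmin_r d1 (eps - Rabs (z - z0))).
        assert (Hz' : Rabs (z + h - z0) < eps).
        { assert (T := abs_tri3 (z + h) z z0). replace (z + h - z) with h in T by ring. lra. }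
        destruct (KP (z + h) p Hz' Hp) as [Kr' KF'].
        assert (Kc' := Kc (z + h) p (conj Hz' Hp) ltac:(replace (z + h - z) with h by ring; lra)
                   ltac:(rewrite Rminus_eq_0, Rabs_R0; lra)).
        fold k in Kc'.
        destruct (mvt_abs (fun s => F s p) (fun s => Ft s p) k (K (z + h) p)) as [c [Hc Ec]].
        { intros t Ht. apply Hd. apply Box; [|unfold r in *; lra].
          assert (T1 := abs_tri3 t k t0). assert (T2 := abs_tri3 (K (z + h) p) t0 k).
          rewrite (Rabs_minus_sym t0 k) in T2. unfold r in *; lra. }
        simpl in Ec. rewrite KF', KF in Ec.
        assert (Bc : m < Ft c p).
        { apply Box; [|unfold r in *; lra]. assert (T1 := abs_tri3 c k t0).
          assert (T2 := abs_tri3 (K (z + h) p) t0 k). rewrite (Rabs_minus_sym t0 k) in T2.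
          unfold r in *; lra. }
        exists k, p, c, p. split; [rewrite Rminus_eq_0, Rabs_R0; lra|].
        split; [rewrite Rminus_eq_0, Rabs_R0; lra|]. split; [lra|].
        split; [rewrite Rminus_eq_0, Rabs_R0; lra|].
        cbv beta. fold k. replace (K (z + h) p - k) with (h / Ft c p).
        * field; split; lra.
        * replace h with (z + h - z) at 1 by ring. rewrite Ec. field. lra.
    - unfold Kp. fold k.
      apply (dpl_of_quot _ _ (fun a b => - Fp a b) Ft k p k p).
      + apply continuity_2d_pt_opp. eapply cont2_on_pt; eauto; apply Bk.
      + eapply cont2_on_pt; eauto; apply Bk.
      + lra.
      + intros d Hd0.
        destruct (CK z p (conj Hz Hp) d Hd0) as [d1 [Hd1 Kc]].
        exists (Rmin (Rmin d1 d) (dl - Rabs (p - p0))). split; [repeat apply Rmin_pos; lra|].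
        intros h Hh Hhe.
        assert (M1 := Rmin_l (Rmin d1 d) (dl - Rabs (p - p0))). assert (M2 := Rmin_r (Rmin d1 d) (dl - Rabs (p - p0))).
        assert (M3 := Rmin_l d1 d). assert (M4 := Rmin_r d1 d).
        assert (Hp' : Rabs (p + h - p0) < dl).
        { assert (T := abs_tri3 (p + h) p p0). replace (p + h - p) with h in T by ring. lra. }
        destruct (KP z (p + h) Hz Hp') as [Kr' KF'].
        assert (Kc' := Kc z (p + h) (conj Hz Hp') ltac:(rewrite Rminus_eq_0, Rabs_R0; lra)
                   ltac:(replace (p + h - p) with h by ring; lra)).
        fold k in Kc'.
        destruct (mvt_abs (fun s => F s (p + h)) (fun s => Ft s (p + h)) k (K z (p + h))) as [c [Hc Ec]].
        { intros t Ht. apply Hd. apply Box; [|unfold r in *; lra].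
          assert (T1 := abs_tri3 t k t0). assert (T2 := abs_tri3 (K z (p + h)) t0 k).
          rewrite (Rabs_minus_sym t0 k) in T2. unfold r in *; lra. }
        destruct (mvt_abs (fun s => F k s) (fun s => Fp k s) p (p + h)) as [c2 [Hc2 Ec2]].
        { intros t Ht. apply Hd. apply Box; [unfold r in *; lra|].
          assert (T1 := abs_tri3 t p p0). replace (p + h - p) with h in Ht by ring. lra. }
        simpl in Ec, Ec2. rewrite KF' in Ec. rewrite KF in Ec2.
        replace (p + h - p) with h in Ec2, Hc2 by ring.
        assert (Bc : m < Ft c (p + h)).
        { apply Box; [|lra]. assert (T1 := abs_tri3 c k t0).
          assert (T2 := abs_tri3 (K z (p + h)) t0 k). rewrite (Rabs_minus_sym t0 k) in T2.
          unfold r in *; lra. }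
        exists k, c2, c, (p + h). split; [rewrite Rminus_eq_0, Rabs_R0; lra|].
        split; [lra|]. split; [lra|].
        split; [replace (p + h - p) with h by ring; lra|].
        cbv beta. fold k. replace (K z (p + h) - k) with (h * (- Fp k c2) / Ft c (p + h)).
        * field; split; lra.
        * apply Rmult_eq_reg_l with (Ft c (p + h)); [|lra].
          field_simplify; [|lra]. lra. }
  assert (SK : forall n, Ck2 n O K).
  { induction n.
    - exact CK.
    - exists Kz, Kp. split; [exact DK|].
      assert (OO : open2 O) by (unfold O; apply open_box).
      assert (IU : forall z p, O z p -> U (K z p) p /\ m < Ft (K z p) p).
      { intros z p [Hz Hp]. destruct (KP z p Hz Hp) as [Kr KF]. apply Box; unfold r in *; lra. }
      assert (C1 : Ck2 n O (fun z p => Ft (K z p) p)).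
      { apply (Ck2_comp n O U Ft K (fun _ p => p)); auto; [apply Ck2_proj2| apply IU]. }
      assert (C2 : Ck2 n O (fun z p => Fp (K z p) p)).
      { apply (Ck2_comp n O U Fp K (fun _ p => p)); auto; [apply Ck2_proj2| apply IU]. }
      assert (C3 : Ck2 n O (fun z p => / Ft (K z p) p)).
      { apply Ck2_inv; auto. intros z p Hzp. assert (X := IU z p Hzp). lra. }
      split.
      + apply (Ck2_mult n O (fun _ _ => 1) (fun z p => / Ft (K z p) p)); auto. apply Ck2_const.
      + apply (Ck2_mult n O (fun z p => - Fp (K z p) p) (fun z p => / Ft (K z p) p)); auto.
        apply (Ck2_ext n O (fun z p => -1 * Fp (K z p) p)); auto; [intros; ring|].
        apply Ck2_mult; auto. apply Ck2_const. }
  exists eps, dl, r, K. split; [exact Heps|]. split; [exact Hdl|]. split; [exact Hr|].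
  split; [|split; [|split]].
  - intros t p Ht Hp. destruct (Box t p ltac:(unfold r in *; lra) ltac:(lra)). split; auto; lra.
  - intros t p Ht Hp Hf. destruct (KP (F t p) p Hf Hp) as [Kr KF].
    apply (Uniq p); auto.
  - intros z p Hz Hp. apply KP; auto.
  - intro n; apply SK.
Qed.


Lemma sm_opp U f : open2 U -> smooth2 U f -> smooth2 U (fun x y => - f x y).
Proof.
  intros HO H. apply (sm_ext U (fun x y => (-1) * f x y)); auto; [intros; ring|].
  apply sm_mult; auto. apply sm_const.
Qed.

Lemma ift U F Ft Fp t0 p0 :
  open2 U -> U t0 p0 ->
  (forall t p, U t p -> derivable_pt_lim (fun s => F s p) t (Ft t p) /\
                        derivable_pt_lim (fun s => F t s) p (Fp t p)) ->
  smooth2 U F -> smooth2 U Ft -> smooth2 U Fp -> Ft t0 p0 <> 0 ->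
  exists eps dl r (K : R -> R -> R), 0 < eps /\ 0 < dl /\ 0 < r /\
   (forall t p, Rabs (t - t0) < r -> Rabs (p - p0) < dl -> U t p /\ Ft t p <> 0) /\
   (forall t p, Rabs (t - t0) < r -> Rabs (p - p0) < dl -> Rabs (F t p - F t0 p0) < eps ->
       K (F t p) p = t) /\
   (forall z p, Rabs (z - F t0 p0) < eps -> Rabs (p - p0) < dl ->
       Rabs (K z p - t0) < r /\ F (K z p) p = z) /\
   smooth2 (fun z p => Rabs (z - F t0 p0) < eps /\ Rabs (p - p0) < dl) K.
Proof.
  intros HO H0 Hd SF SFt SFp Hn.
  destruct (Rlt_or_le 0 (Ft t0 p0)) as [Hp|Hm].
  - apply (ift_pos U F Ft Fp); auto.
  - destruct (ift_pos U (fun t p => - F t p) (fun t p => - Ft t p) (fun t p => - Fp t p) t0 p0)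
      as [eps [dl [r [K [He [Hdl [Hr [P1 [P2 [P3 P4]]]]]]]]]]; auto.
    + intros t p Htp. destruct (Hd t p Htp) as [D1 D2]. split.
      * exact (derivable_pt_lim_opp _ _ _ D1).
      * exact (derivable_pt_lim_opp _ _ _ D2).
    + apply sm_opp; auto.
    + apply sm_opp; auto.
    + apply sm_opp; auto.
    + lra.
    + exists eps, dl, r, (fun z p => K (- z) p). split; [auto|]. split; [auto|]. split; [auto|].
      split; [|split; [|split]].
      * intros t1 p1 Ht Hp. destruct (P1 t1 p1 Ht Hp) as [Q1 Q2]. split; auto. intro E; apply Q2; rewrite E; ring.
      * intros t1 p1 Ht Hp Hf. apply P2; auto.
        replace (- F t1 p1 - - F t0 p0) with (- (F t1 p1 - F t0 p0)) by ring. rewrite Rabs_Ropp; auto.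
      * intros z p Hz Hp. destruct (P3 (- z) p) as [Q1 Q2]; auto.
        replace (- z - - F t0 p0) with (- (z - F t0 p0)) by ring. rewrite Rabs_Ropp; auto.
        split; auto. lra.
      * apply (sm_comp _ (fun z p => Rabs (z - - F t0 p0) < eps /\ Rabs (p - p0) < dl)); auto.
        -- apply open_box.
        -- apply open_box.
        -- apply sm_opp; [apply open_box| apply sm_proj1].
        -- apply sm_proj2.
        -- intros z p [Hz Hp]. split; auto.
           replace (- z - - F t0 p0) with (- (z - F t0 p0)) by ring. rewrite Rabs_Ropp; auto.
Qed.


Lemma sm_div U f g : open2 U -> (forall x y, U x y -> g x y <> 0) -> smooth2 U f -> smooth2 U g ->
  smooth2 U (fun x y => f x y / g x y).
Proof. intros. unfold Rdiv. apply sm_mult; auto. apply sm_inv; auto. Qed.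
Lemma sm_minus U f g : open2 U -> smooth2 U f -> smooth2 U g -> smooth2 U (fun x y => f x y - g x y).
Proof. intros. unfold Rminus. apply sm_plus; auto. apply sm_opp; auto. Qed.

Ltac smt := repeat first
  [ assumption
  | apply sm_const | apply sm_proj1 | apply sm_proj2
  | apply sm_plus | apply sm_minus; [assumption| |] | apply sm_mult; [assumption| |]
  | apply sm_opp; [assumption|]
  | apply sm_inv; [assumption| solve [auto] |] ].

Lemma sm_ip U A B : open2 U -> smooth_vec2 U A -> smooth_vec2 U B ->
  smooth2 U (fun x y => ip (A x y) (B x y)).
Proof.
  intros HO [A1 [A2 A3]] [B1 [B2 B3]]. unfold ip. smt.
Qed.

Lemma sm_tang U Z a b : open2 U -> smooth_vec2 U a -> smooth_vec2 U b ->
  (forall x y, U x y -> timelike_plane (a x y) (b x y)) ->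
  smooth_vec2 U (fun x y => tangential_part Z (a x y) (b x y)).
Proof.
  intros HO Ha Hb HT.
  assert (E := sm_ip U a a HO Ha Ha). assert (Fm := sm_ip U a b HO Ha Hb).
  assert (G := sm_ip U b b HO Hb Hb).
  assert (SZ : smooth_vec2 U (fun _ _ => Z)) by (repeat split; apply sm_const).
  assert (Za := sm_ip U (fun _ _ => Z) a HO SZ Ha). assert (Zb := sm_ip U (fun _ _ => Z) b HO SZ Hb).
  assert (Dn : forall x y, U x y -> ip (a x y) (a x y) * ip (b x y) (b x y) - ip (a x y) (b x y) * ip (a x y) (b x y) <> 0).
  { intros x y H; specialize (HT x y H); unfold timelike_plane in HT; lra. }
  assert (SD : smooth2 U (fun x y => ip (a x y) (a x y) * ip (b x y) (b x y) - ip (a x y) (b x y) * ip (a x y) (b x y))) by smt.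
  destruct Ha as [a1 [a2 a3]]. destruct Hb as [b1 [b2 b3]].
  unfold tangential_part; simpl. unfold Rdiv. repeat split; smt.
Qed.


Lemma vec_eq V W : v1 V = v1 W -> v2 V = v2 W -> v3 V = v3 W -> V = W.
Proof. destruct V, W; simpl; intros -> -> ->; reflexivity. Qed.

Lemma null_v1 V : ip V V = 0 -> V <> vzero -> v1 V <> 0.
Proof.
  intros H Hn E. apply Hn. destruct V as [a b c]; unfold ip in H; simpl in *.
  subst. assert (b * b + c * c = 0) by lra.
  assert (b = 0) by nra. assert (c = 0) by nra. subst. reflexivity.
Qed.

Lemma tang_ip Z a b : ip a a * ip b b - ip a b * ip a b <> 0 ->
  let X := tangential_part Z a b in ip X X = ip X Z.
Proof.
  intros HD X. unfold X, tangential_part, ip in *. destruct Z, a, b; simpl in *.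
  field. exact HD.
Qed.

Lemma tang_zero a b : tangential_part vzero a b = vzero.
Proof.
  unfold tangential_part, ip, vzero; simpl. apply vec_eq; simpl; unfold Rdiv; ring.
Qed.

Lemma tang_span Z a b : exists c d, tangential_part Z a b = vadd (vscale c a) (vscale d b).
Proof. unfold tangential_part. eexists; eexists; reflexivity. Qed.

Definition lx (Z V : vec) : vec :=
  mkV (- (v2 Z * v3 V - v3 Z * v2 V)) (v3 Z * v1 V - v1 Z * v3 V) (v1 Z * v2 V - v2 Z * v1 V).
Definition kap (Z V : vec) : R := v1 (lx Z V) / v1 V.

Lemma eig Z V : ip V V = 0 -> ip Z V = 0 -> v1 V <> 0 -> lx Z V = vscale (kap Z V) V.
Proof.
  intros H1 H2 Hn. unfold kap, lx, ip, vscale in *. destruct Z as [a b c], V as [x y z]; simpl in *.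
  assert (K1 : (c * x - a * z) * x - (- (b * z - c * y)) * y = - c * (- x * x + y * y + z * z) + z * (- a * x + b * y + c * z)) by ring.
  assert (K2 : (a * y - b * x) * x - (- (b * z - c * y)) * z = b * (- x * x + y * y + z * z) - y * (- a * x + b * y + c * z)) by ring.
  rewrite H1, H2 in K1, K2.
  apply vec_eq; simpl.
  - field; auto.
  - apply Rmult_eq_reg_r with x; auto.
    replace (- (b * z - c * y) / x * y * x) with (- (b * z - c * y) * y) by (field; auto). lra.
  - apply Rmult_eq_reg_r with x; auto.
    replace (- (b * z - c * y) / x * z * x) with (- (b * z - c * y) * z) by (field; auto). lra.
Qed.

Lemma kap_sq Z V : ip V V = 0 -> ip Z V = 0 -> v1 V <> 0 -> kap Z V * kap Z V = ip Z Z.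
Proof.
  intros H1 H2 Hn. unfold kap, lx, ip in *. destruct Z as [a b c], V as [x y z]; simpl in *.
  assert (K : (b * z - c * y) * (b * z - c * y) - (- a * a + b * b + c * c) * (x * x) =
     (b * b + c * c) * (- x * x + y * y + z * z) - 2 * a * x * (- a * x + b * y + c * z)
     - (- a * x + b * y + c * z) * (- a * x + b * y + c * z)) by ring.
  rewrite H1, H2 in K.
  apply Rmult_eq_reg_r with (x * x); [|intro; apply Hn; nra].
  replace (- (b * z - c * y) / x * (- (b * z - c * y) / x) * (x * x)) with
    ((b * z - c * y) * (b * z - c * y)) by (field; auto). lra.
Qed.

Lemma div_helper x a n m : n <> 0 -> x * n = a * m -> x = a / n * m.
Proof. intros Hn E. apply Rmult_eq_reg_r with n; auto. rewrite E. field; auto. Qed.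

Lemma null_orth_par V N : ip V V = 0 -> ip N N = 0 -> ip V N = 0 -> v1 N <> 0 ->
  V = vscale (v1 V / v1 N) N.
Proof.
  intros H1 H2 H3 Hn. unfold ip in *. destruct V as [x1 x2 x3], N as [n1 n2 n3]; simpl in *.
  assert (S : (x2 * n1 - x1 * n2) ^ 2 + (x3 * n1 - x1 * n3) ^ 2 = 0).
  { replace ((x2 * n1 - x1 * n2) ^ 2 + (x3 * n1 - x1 * n3) ^ 2) with
      ((x2 * x2 + x3 * x3) * (n1 * n1) - 2 * (x1 * n1) * (x2 * n2 + x3 * n3) + (x1 * x1) * (n2 * n2 + n3 * n3)) by ring.
    replace (x2 * x2 + x3 * x3) with (x1 * x1) by lra.
    replace (n2 * n2 + n3 * n3) with (n1 * n1) by nra.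
    replace (x2 * n2 + x3 * n3) with (x1 * n1) by nra. ring. }
  assert (P1 := pow2_ge_0 (x2 * n1 - x1 * n2)). assert (P2 := pow2_ge_0 (x3 * n1 - x1 * n3)).
  assert (A1 : x2 * n1 - x1 * n2 = 0).
  { destruct (Req_dec (x2 * n1 - x1 * n2) 0) as [?|Hne]; auto. exfalso.
    assert (X := pow_nonzero _ 2 Hne). lra. }
  assert (A2 : x3 * n1 - x1 * n3 = 0).
  { destruct (Req_dec (x3 * n1 - x1 * n3) 0) as [?|Hne]; auto. exfalso.
    assert (X := pow_nonzero _ 2 Hne). lra. }
  unfold vscale; apply vec_eq; simpl; apply div_helper; auto; lra.
Qed.

Lemma lx_skew Z V N : ip (lx Z V) N = - ip (lx Z N) V.
Proof. unfold lx, ip; simpl; ring. Qed.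

Lemma par_same_kap Z V N : Z <> vzero ->
  ip V V = 0 -> ip Z V = 0 -> v1 V <> 0 ->
  ip N N = 0 -> ip Z N = 0 -> v1 N <> 0 ->
  kap Z V = kap Z N -> V = vscale (v1 V / v1 N) N.
Proof.
  intros HZ H1 H2 H3 H4 H5 H6 Hk.
  destruct (Req_dec (kap Z N) 0) as [K0|K0].
  -
    assert (ZZ : ip Z Z = 0) by (rewrite <- (kap_sq Z N); auto; rewrite K0; ring).
    assert (Z1 : v1 Z <> 0) by (apply null_v1; auto).
    assert (EV := null_orth_par V Z H1 ZZ ltac:(unfold ip in *; lra) Z1).
    assert (EN := null_orth_par N Z H4 ZZ ltac:(unfold ip in *; lra) Z1).
    set (sV := v1 V / v1 Z) in EV. set (sN := v1 N / v1 Z) in EN.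
    assert (a1 : v1 V = sV * v1 Z) by (rewrite EV at 1; reflexivity).
    assert (a2 : v2 V = sV * v2 Z) by (rewrite EV at 1; reflexivity).
    assert (a3 : v3 V = sV * v3 Z) by (rewrite EV at 1; reflexivity).
    assert (b1 : v1 N = sN * v1 Z) by (rewrite EN at 1; reflexivity).
    assert (b2 : v2 N = sN * v2 Z) by (rewrite EN at 1; reflexivity).
    assert (b3 : v3 N = sN * v3 Z) by (rewrite EN at 1; reflexivity).
    assert (sN <> 0) by (intro E0; apply H6; rewrite b1, E0; ring).
    unfold vscale; apply vec_eq; simpl; rewrite a1, b1; [| rewrite a2, b2| rewrite a3, b3]; field; auto.
  - apply null_orth_par; auto.
    assert (E1 := eig Z V H1 H2 H3). assert (E2 := eig Z N H4 H5 H6).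
    assert (S := lx_skew Z V N). rewrite E1, E2, Hk in S.
    unfold ip, vscale in S; simpl in S.
    assert (kap Z N * (2 * ip V N) = 0) by (unfold ip; lra).
    apply Rmult_integral in H. destruct H; [contradiction| lra].
Qed.

Lemma gram_indep A B a b : ip A A * ip B B - ip A B * ip A B < 0 ->
  vadd (vscale a A) (vscale b B) = vzero -> a = 0 /\ b = 0.
Proof.
  intros HG E.
  assert (E1 : ip (vadd (vscale a A) (vscale b B)) A = 0) by (rewrite E; unfold ip, vzero; simpl; ring).
  assert (E2 : ip (vadd (vscale a A) (vscale b B)) B = 0) by (rewrite E; unfold ip, vzero; simpl; ring).
  replace (ip (vadd (vscale a A) (vscale b B)) A) with (a * ip A A + b * ip A B) in E1
    by (unfold ip; simpl; ring).
  replace (ip (vadd (vscale a A) (vscale b B)) B) with (a * ip A B + b * ip B B) in E2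
    by (unfold ip; simpl; ring).
  set (e := ip A A) in *. set (f := ip A B) in *. set (g := ip B B) in *.
  assert (X1 : a * (e * g - f * f) = 0).
  { replace (a * (e * g - f * f)) with (g * (a * e + b * f) - f * (a * f + b * g)) by ring.
    rewrite E1, E2; ring. }
  assert (X2 : b * (e * g - f * f) = 0).
  { replace (b * (e * g - f * f)) with (e * (a * f + b * g) - f * (a * e + b * f)) by ring.
    rewrite E1, E2; ring. }
  apply Rmult_integral in X1. apply Rmult_integral in X2.
  split; [destruct X1| destruct X2]; auto; lra.
Qed.

Lemma tan_par A B p q a b T0 : ip A A * ip B B - ip A B * ip A B < 0 ->
  T0 = vadd (vscale p A) (vscale q B) -> T0 <> vzero -> ip T0 T0 = 0 ->
  ip (vadd (vscale a A) (vscale b B)) T0 = 0 ->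
  exists l, vadd (vscale a A) (vscale b B) = vscale l T0.
Proof.
  intros HG ET Hn HN HX.
  set (X := vadd (vscale a A) (vscale b B)) in *.
  assert (Id : ip X X * ip T0 T0 - ip X T0 * ip X T0 =
               (a * q - b * p) ^ 2 * (ip A A * ip B B - ip A B * ip A B)).
  { unfold X; rewrite ET; unfold ip; simpl; ring. }
  rewrite HN, HX in Id.
  assert (Hz : a * q - b * p = 0).
  { assert ((a * q - b * p) ^ 2 = 0) by nra. nra. }
  destruct (Req_dec p 0) as [Hp|Hp].
  - assert (Hq : q <> 0).
    { intro Hq. apply Hn. rewrite ET, Hp, Hq. unfold vscale, vadd, vzero; apply vec_eq; simpl; ring. }
    assert (Ha : a = 0) by (subst p; apply Rmult_eq_reg_r with q; auto; lra).
    exists (b / q). unfold X; rewrite ET, Ha, Hp. apply vec_eq; simpl; field; auto.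
  - exists (a / p). unfold X; rewrite ET.
    assert (Hb : b = a * q / p) by (field_simplify; auto; apply Rmult_eq_reg_r with p; auto; field_simplify; auto; lra).
    rewrite Hb. apply vec_eq; simpl; field; auto.
Qed.

Lemma grad_nz A B p q T0 : ip A A * ip B B - ip A B * ip A B < 0 ->
  T0 = vadd (vscale p A) (vscale q B) -> T0 <> vzero -> ip A T0 <> 0 \/ ip B T0 <> 0.
Proof.
  intros HG ET Hn.
  destruct (Req_dec (ip A T0) 0) as [H1|H1]; [|left; auto].
  destruct (Req_dec (ip B T0) 0) as [H2|H2]; [|right; auto].
  exfalso. apply Hn.
  assert (E1 : p * ip A A + q * ip A B = 0) by (rewrite ET in H1; unfold ip in *; simpl in *; lra).
  assert (E2 : p * ip A B + q * ip B B = 0) by (rewrite ET in H2; unfold ip in *; simpl in *; lra).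
  set (e := ip A A) in *. set (f := ip A B) in *. set (g := ip B B) in *.
  assert (X1 : p * (e * g - f * f) = 0).
  { replace (p * (e * g - f * f)) with (g * (p * e + q * f) - f * (p * f + q * g)) by ring.
    rewrite E1, E2; ring. }
  assert (X2 : q * (e * g - f * f) = 0).
  { replace (q * (e * g - f * f)) with (e * (p * f + q * g) - f * (p * e + q * f)) by ring.
    rewrite E1, E2; ring. }
  apply Rmult_integral in X1. apply Rmult_integral in X2.
  assert (p = 0) by (destruct X1; auto; lra). assert (q = 0) by (destruct X2; auto; lra).
  rewrite ET; subst; apply vec_eq; simpl; ring.
Qed.


Lemma select U a b Z u0 v0 : open2 U -> U u0 v0 ->
  smooth_vec2 U a -> smooth_vec2 U b ->
  (forall x y, U x y -> timelike_plane (a x y) (b x y)) ->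
  (forall x y, U x y -> lightlike (tangential_part Z (a x y) (b x y))) ->
  exists rho, 0 < rho /\ forall u v, Rabs (u - u0) < rho -> Rabs (v - v0) < rho ->
    U u v /\ exists c d, tangential_part Z (a u0 v0) (b u0 v0) = vadd (vscale c (a u v)) (vscale d (b u v)).
Proof.
  intros HO H0 Sa Sb HT HN.
  set (XT := fun x y => tangential_part Z (a x y) (b x y)).
  assert (Dn : forall x y, U x y -> ip (a x y) (a x y) * ip (b x y) (b x y) - ip (a x y) (b x y) * ip (a x y) (b x y) <> 0).
  { intros x y H; specialize (HT x y H); unfold timelike_plane in HT; lra. }
  assert (Orth : forall x y, U x y -> ip Z (XT x y) = 0).
  { intros x y H. assert (E := tang_ip Z (a x y) (b x y) (Dn x y H)). simpl in E.
    destruct (HN x y H) as [_ Hn]. fold (XT x y) in E, Hn. unfold ip in *; lra. }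
  assert (Zn : Z <> vzero).
  { intro EZ. destruct (HN u0 v0 H0) as [Hn _]. apply Hn. rewrite EZ. apply tang_zero. }
  assert (X1n : forall x y, U x y -> v1 (XT x y) <> 0).
  { intros x y H. destruct (HN x y H) as [Hn Hl]. apply null_v1; auto. }
  assert (SX : smooth_vec2 U XT) by (apply sm_tang; auto).
  assert (SK : smooth2 U (fun x y => kap Z (XT x y))).
  { destruct SX as [s1 [s2 s3]]. unfold kap, lx; simpl. apply sm_div; auto. smt. }
  assert (Sq : forall x y, U x y -> kap Z (XT x y) * kap Z (XT x y) = ip Z Z).
  { intros x y H. destruct (HN x y H) as [Hn Hl]. apply kap_sq; auto. }
  set (k0 := kap Z (XT u0 v0)).
  assert (Same : exists rho, 0 < rho /\ forall u v, Rabs (u - u0) < rho -> Rabs (v - v0) < rho ->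
                   U u v /\ kap Z (XT u v) = k0).
  { destruct (HO u0 v0 H0) as [r0 [Hr0 HU0]].
    destruct (Req_dec k0 0) as [K0|K0].
    - exists r0; split; auto. intros u v Hu Hv. split; [auto|].
      assert (Huv := HU0 u v Hu Hv).
      assert (E := Sq u v Huv). rewrite <- (Sq u0 v0 H0) in E. fold k0 in E. rewrite K0 in E.
      assert (kap Z (XT u v) * kap Z (XT u v) = 0) by lra. rewrite K0.
      apply Rmult_integral in H. destruct H; auto.
    - assert (C := cont2_on_pt U _ u0 v0 HO (sm_cont U _ HO SK) H0).
      assert (Hk : 0 < Rabs k0) by (apply Rabs_pos_lt; auto).
      destruct (C (mkposreal _ Hk)) as [d Hd]. simpl in Hd.
      exists (Rmin r0 d). split; [apply Rmin_pos; [auto| apply cond_pos]|].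
      intros u v Hu Hv.
      assert (M1 := Rmin_l r0 d). assert (M2 := Rmin_r r0 d).
      assert (Huv := HU0 u v ltac:(lra) ltac:(lra)). split; auto.
      assert (E := Sq u v Huv). rewrite <- (Sq u0 v0 H0) in E. fold k0 in E.
      assert (Dk := Hd u v ltac:(lra) ltac:(lra)). fold k0 in Dk.
      set (k := kap Z (XT u v)) in *.
      assert (F1 : (k - k0) * (k + k0) = 0) by (ring_simplify; lra).
      apply Rmult_integral in F1. destruct F1 as [F1|F1]; [lra|].
      exfalso. replace (k - k0) with (- (2 * k0)) in Dk by lra.
      rewrite Rabs_Ropp, Rabs_mult, (Rabs_right 2) in Dk by lra. lra. }
  destruct Same as [rho [Hrho Hs]].
  exists rho; split; auto. intros u v Hu Hv. destruct (Hs u v Hu Hv) as [Huv Hk].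
  split; auto.
  destruct (HN u v Huv) as [Hn1 Hl1]. destruct (HN u0 v0 H0) as [Hn0 Hl0].
  assert (P := par_same_kap Z (XT u v) (XT u0 v0) Zn Hl1 (Orth u v Huv) (X1n u v Huv)
                 Hl0 (Orth u0 v0 H0) (X1n u0 v0 H0) Hk).
  set (l := v1 (XT u v) / v1 (XT u0 v0)) in P.
  assert (Hl : l <> 0) by (unfold l; unfold Rdiv; apply Rmult_integral_contrapositive; split;
                           [apply X1n; auto| apply Rinv_neq_0_compat; apply X1n; auto]).
  destruct (tang_span Z (a u v) (b u v)) as [c [d Ecd]].
  exists (c / l), (d / l). fold (XT u0 v0). fold (XT u v) in Ecd.
  apply vec_eq.
  - assert (E1 : v1 (XT u v) = l * v1 (XT u0 v0)) by (rewrite P at 1; reflexivity).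
    rewrite Ecd in E1. simpl in *. apply Rmult_eq_reg_l with l; auto. rewrite <- E1. field; auto.
  - assert (E1 : v2 (XT u v) = l * v2 (XT u0 v0)) by (rewrite P at 1; reflexivity).
    rewrite Ecd in E1. simpl in *. apply Rmult_eq_reg_l with l; auto. rewrite <- E1. field; auto.
  - assert (E1 : v3 (XT u v) = l * v3 (XT u0 v0)) by (rewrite P at 1; reflexivity).
    rewrite Ecd in E1. simpl in *. apply Rmult_eq_reg_l with l; auto. rewrite <- E1. field; auto.
Qed.


Lemma antideriv (Q : R -> R) a b x0 : a < x0 < b -> cont1_on (fun x => a < x < b) Q ->
  RInt Q x0 x0 = 0 /\
  forall x, a < x < b -> derivable_pt_lim (fun x => RInt Q x0 x) x (Q x).
Proof.
  intros Hx0 HQ. split; [exact (RInt_point (V := R_CompleteNormedModule) x0 Q)|].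
  assert (CQ : forall z, a < z < b -> continuous Q z).
  { intros z Hz. apply continuity_pt_filterlim.
    intros e He. destruct (HQ z Hz e He) as [d [Hd Hf]].
    exists (Rmin d (Rmin (z - a) (b - z))). split.
    - apply Rmin_pos; [lra| apply Rmin_pos; lra].
    - intros z' [[_ Hzz] Hd']. unfold dist in *; simpl in *; unfold R_dist in *.
      assert (M1 := Rmin_l d (Rmin (z - a) (b - z))). assert (M2 := Rmin_r d (Rmin (z - a) (b - z))).
      assert (M3 := Rmin_l (z - a) (b - z)). assert (M4 := Rmin_r (z - a) (b - z)).
      apply Rabs_def2 in Hd'. apply Hf; [lra| apply Rabs_def1; lra]. }
  intros x Hx. apply is_derive_Reals.
  apply (is_derive_RInt Q (fun x => RInt Q x0 x) x0 x); [|apply CQ; auto].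
  apply (locally_interval _ x a b); try (simpl; lra).
  intros y Hay Hyb. simpl in Hay, Hyb. apply (RInt_correct (V := R_CompleteNormedModule)). apply (ex_RInt_continuous (V := R_CompleteNormedModule)).
  intros z Hz. apply CQ.
  assert (Rmin x0 y <= z <= Rmax x0 y) by exact Hz.
  unfold Rmin, Rmax in H; destruct (Rle_dec x0 y); lra.
Qed.

Lemma dpl_scal f x a c : derivable_pt_lim f x a -> derivable_pt_lim (fun t => c * f t) x (c * a).
Proof. intros H. eapply dpl_eq; [apply (dpl_mult (fun _ => c) f); [apply dpl_const| exact H]| ring]. Qed.

Lemma dpl_ip_const (A : R -> vec) T x a :
  derivable_pt_lim (fun t => v1 (A t)) x (v1 a) ->
  derivable_pt_lim (fun t => v2 (A t)) x (v2 a) ->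
  derivable_pt_lim (fun t => v3 (A t)) x (v3 a) ->
  derivable_pt_lim (fun t => ip (A t) T) x (ip a T).
Proof.
  intros D1 D2 D3.
  assert (E : (fun t => ip (A t) T) =
     (fun t => (- v1 T) * v1 (A t) + ((v2 T) * v2 (A t) + (v3 T) * v3 (A t)))).
  { apply functional_extensionality; intro t; unfold ip; ring. }
  rewrite E. apply dpl_eq with ((- v1 T) * v1 a + ((v2 T) * v2 a + (v3 T) * v3 a)); [|unfold ip; ring].
  apply dpl_plus; [|apply dpl_plus]; apply dpl_scal; auto.
Qed.

Lemma zero_deriv_const (D : R -> R) v0 v :
  (forall s, Rabs (s - v0) <= Rabs (v - v0) -> derivable_pt_lim D s 0) -> D v = D v0.
Proof.
  intros H. destruct (mvt_abs D (fun _ => 0) v0 v H) as [c [_ E]]. lra.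
Qed.

Lemma comp_deriv U V f fx fy G1 G2 G1x G1y G2x G2y x y : open2 V ->
  (forall a b, V a b -> derivable_pt_lim (fun t => f t b) a (fx a b) /\
                        derivable_pt_lim (fun t => f a t) b (fy a b)) ->
  smooth2 V fx -> smooth2 V fy ->
  (forall a b, U a b -> derivable_pt_lim (fun t => G1 t b) a (G1x a b) /\
                        derivable_pt_lim (fun t => G1 a t) b (G1y a b)) ->
  (forall a b, U a b -> derivable_pt_lim (fun t => G2 t b) a (G2x a b) /\
                        derivable_pt_lim (fun t => G2 a t) b (G2y a b)) ->
  (forall a b, U a b -> V (G1 a b) (G2 a b)) -> U x y ->
  derivable_pt_lim (fun t => f (G1 t y) (G2 t y)) x
     (fx (G1 x y) (G2 x y) * G1x x y + fy (G1 x y) (G2 x y) * G2x x y) /\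
  derivable_pt_lim (fun t => f (G1 x t) (G2 x t)) y
     (fx (G1 x y) (G2 x y) * G1y x y + fy (G1 x y) (G2 x y) * G2y x y).
Proof.
  intros HV Hf Sx Sy H1 H2 HG Hxy.
  assert (Dif := sm_diff V f fx fy (G1 x y) (G2 x y) HV (HG x y Hxy) Hf Sx Sy).
  split.
  - apply (derivable_pt_lim_comp_2d f (fun t => G1 t y) (fun t => G2 t y)); auto;
       [apply H1| apply H2]; auto.
  - apply (derivable_pt_lim_comp_2d f (fun t => G1 x t) (fun t => G2 x t)); auto;
       [apply H1| apply H2]; auto.
Qed.


Definition isc (pr : vec -> R) := pr = v1 \/ pr = v2 \/ pr = v3.
Lemma isc_add pr A B : isc pr -> pr (vadd A B) = pr A + pr B.
Proof. intros [->|[->| ->]]; reflexivity. Qed.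
Lemma isc_scale pr c A : isc pr -> pr (vscale c A) = c * pr A.
Proof. intros [->|[->| ->]]; reflexivity. Qed.
Lemma vec_eq_isc V W : (forall pr, isc pr -> pr V = pr W) -> V = W.
Proof.
  intros H. apply vec_eq; apply H; unfold isc; auto.
Qed.
Lemma sv2_isc U A : smooth_vec2 U A -> forall pr, isc pr -> smooth2 U (fun x y => pr (A x y)).
Proof. intros [H1 [H2 H3]] pr [->|[->| ->]]; auto. Qed.
Lemma isc_sv2 U A : (forall pr, isc pr -> smooth2 U (fun x y => pr (A x y))) -> smooth_vec2 U A.
Proof. intros H. unfold isc in H; repeat split; apply H; auto. Qed.
Lemma isc_sv1 I A : (forall pr, isc pr -> smooth1 I (fun x => pr (A x))) -> smooth_vec1 I A.
Proof. intros H. unfold isc in H; repeat split; apply H; auto. Qed.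
Lemma isc_dv1 I A dA : (forall x, I x -> forall pr, isc pr -> derivable_pt_lim (fun t => pr (A t)) x (pr (dA x))) ->
  is_deriv_vec1 I A dA.
Proof. intros H x Hx. unfold isc in H; repeat split; apply H; auto. Qed.
Lemma partials_isc U phi phix phiy : is_partials U phi phix phiy ->
  forall pr, isc pr -> forall x y, U x y ->
    derivable_pt_lim (fun t => pr (phi t y)) x (pr (phix x y)) /\
    derivable_pt_lim (fun t => pr (phi x t)) y (pr (phiy x y)).
Proof.
  intros H pr Hpr x y Hxy. destruct (H x y Hxy) as [D1 [D2 [D3 [D4 [D5 D6]]]]].
  destruct Hpr as [->|[->| ->]]; auto.
Qed.
Lemma dpl_ip_isc (A : R -> vec) T x a :
  (forall pr, isc pr -> derivable_pt_lim (fun t => pr (A t)) x (pr a)) ->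
  derivable_pt_lim (fun t => ip (A t) T) x (ip a T).
Proof. intros H. apply dpl_ip_const; apply H; unfold isc; auto. Qed.

Definition concl (U : R -> R -> Prop) (phi : R -> R -> vec) (u0 v0 : R) : Prop :=
  exists (V W : R -> R -> Prop) (a b : R) (alpha dalpha : R -> vec) (T0 : vec)
         (h1 h2 g1 g2 : R -> R -> R),
    open2 V /\ (forall u v, V u v -> U u v) /\ V u0 v0 /\
    open2 W /\ a < b /\ (forall x y, W x y -> a < x < b) /\
    smooth_vec1 (fun x => a < x < b) alpha /\
    is_deriv_vec1 (fun x => a < x < b) alpha dalpha /\
    (forall x, a < x < b -> lightlike (dalpha x)) /\
    lightlike T0 /\
    (forall x, a < x < b -> lin_indep2 (dalpha x) T0) /\
    smooth2 W h1 /\ smooth2 W h2 /\ smooth2 V g1 /\ smooth2 V g2 /\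
    (forall x y, W x y ->
       V (h1 x y) (h2 x y) /\ g1 (h1 x y) (h2 x y) = x /\ g2 (h1 x y) (h2 x y) = y) /\
    (forall u v, V u v ->
       W (g1 u v) (g2 u v) /\ h1 (g1 u v) (g2 u v) = u /\ h2 (g1 u v) (g2 u v) = v) /\
    (forall x y, W x y -> phi (h1 x y) (h2 x y) = vadd (alpha x) (vscale y T0)).

Lemma core U phi phix phiy T0 u0 v0 :
  open2 U -> U u0 v0 ->
  smooth_vec2 U phi -> smooth_vec2 U phix -> smooth_vec2 U phiy ->
  is_partials U phi phix phiy ->
  (forall x y, U x y -> timelike_plane (phix x y) (phiy x y)) ->
  (forall x y, U x y -> exists c d, T0 = vadd (vscale c (phix x y)) (vscale d (phiy x y))) ->
  lightlike T0 ->
  ip (phix u0 v0) T0 <> 0 ->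
  concl U phi u0 v0.
Proof.
  intros HO H0 Sphi Sx Sy HP HT Hspan [T0n T0l] Hgrad.
  assert (T01 : v1 T0 <> 0) by (apply null_v1; auto).
  assert (SC : smooth_vec2 U (fun _ _ => T0)) by (repeat split; apply sm_const).
  set (F := fun u v => ip (phi u v) T0).
  set (Ft := fun u v => ip (phix u v) T0).
  set (Fp := fun u v => ip (phiy u v) T0).
  assert (DF : forall t p, U t p -> derivable_pt_lim (fun s => F s p) t (Ft t p) /\
                                 derivable_pt_lim (fun s => F t s) p (Fp t p)).
  { intros t p Htp. split; apply dpl_ip_isc; intros pr Hpr; apply (partials_isc U phi phix phiy HP pr Hpr t p Htp). }
  assert (SF : smooth2 U F) by (apply sm_ip; auto).
  assert (SFt : smooth2 U Ft) by (apply sm_ip; auto).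
  assert (SFp : smooth2 U Fp) by (apply sm_ip; auto).
  destruct (ift U F Ft Fp u0 v0 HO H0 DF SF SFt SFp Hgrad)
    as [eps1 [dl1 [r1 [K1 [He1 [Hdl1 [Hr1 [A1 [A2 [A3 A4]]]]]]]]]].
  set (x0 := F u0 v0) in *.
  set (O1 := fun x v => Rabs (x - x0) < eps1 /\ Rabs (v - v0) < dl1) in *.
  assert (OO1 : open2 O1) by apply open_box.
  assert (UK : forall x v, O1 x v -> U (K1 x v) v).
  { intros x v [Hx Hv]. destruct (A3 x v Hx Hv). apply A1; auto. }
  assert (FK : forall x v, O1 x v -> F (K1 x v) v = x).
  { intros x v [Hx Hv]. apply A3; auto. }
  destruct (sm_partials O1 K1 OO1 A4) as [K1x [K1v [DK1 [SK1x SK1v]]]].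
  set (P := fun x v => phi (K1 x v) v).
  set (Px := fun x v => vscale (K1x x v) (phix (K1 x v) v)).
  set (Pv := fun x v => vadd (vscale (K1v x v) (phix (K1 x v) v)) (vscale 1 (phiy (K1 x v) v))).
  assert (DP : forall pr, isc pr -> forall x v, O1 x v ->
     derivable_pt_lim (fun t => pr (P t v)) x (pr (Px x v)) /\
     derivable_pt_lim (fun t => pr (P x t)) v (pr (Pv x v))).
  { intros pr Hpr x v Hxv.
    destruct (comp_deriv O1 U (fun a b => pr (phi a b)) (fun a b => pr (phix a b)) (fun a b => pr (phiy a b))
                K1 (fun _ v => v) K1x K1v (fun _ _ => 0) (fun _ _ => 1) x v HO) as [E1 E2]; auto.
    - apply (partials_isc U phi phix phiy HP pr Hpr).
    - apply sv2_isc; auto.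
    - apply sv2_isc; auto.
    - intros a b Hab; split; [apply dpl_const| apply dpl_id].
    - split.
      + eapply dpl_eq; [exact E1|]. unfold Px. rewrite isc_scale; auto. ring.
      + eapply dpl_eq; [exact E2|]. unfold Pv. rewrite isc_add, !isc_scale; auto. ring. }
  assert (SP : forall pr, isc pr -> smooth2 O1 (fun x v => pr (P x v))).
  { intros pr Hpr. unfold P. apply (sm_comp O1 U (fun a b => pr (phi a b)) K1 (fun _ v => v)); auto.
    - apply sv2_isc; auto.
    - apply sm_proj2. }
  assert (IPx : forall x v, O1 x v -> ip (Px x v) T0 = 1).
  { intros x v Hxv.
    assert (D1 : derivable_pt_lim (fun t => ip (P t v) T0) x (ip (Px x v) T0)).
    { apply dpl_ip_isc; intros pr Hpr; apply DP; auto. }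
    assert (D2 : derivable_pt_lim (fun t => ip (P t v) T0) x 1).
    { apply (dpl_ext_open1 O1 (fun a b => a) (fun a b => ip (P a b) T0) x v 1 OO1 Hxv).
      - intros a b Hab. symmetry. apply FK; auto.
      - apply dpl_id. }
    eapply uniqueness_limite; eauto. }
  assert (IPv : forall x v, O1 x v -> ip (Pv x v) T0 = 0).
  { intros x v Hxv.
    assert (D1 : derivable_pt_lim (fun t => ip (P x t) T0) v (ip (Pv x v) T0)).
    { apply dpl_ip_isc; intros pr Hpr; apply DP; auto. }
    assert (D2 : derivable_pt_lim (fun t => ip (P x t) T0) v 0).
    { apply (dpl_ext_open2 O1 (fun a b => a) (fun a b => ip (P a b) T0) x v 0 OO1 Hxv).
      - intros a b Hab. symmetry. apply FK; auto.
      - apply dpl_const. }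
    eapply uniqueness_limite; eauto. }
  assert (PvT : forall x v, O1 x v -> exists l, Pv x v = vscale l T0).
  { intros x v Hxv. destruct (Hspan _ _ (UK x v Hxv)) as [p [q Epq]].
    apply (tan_par (phix (K1 x v) v) (phiy (K1 x v) v) p q (K1v x v) 1 T0); auto.
    - apply HT; auto.
    - apply IPv; auto. }
  assert (Pvn : forall x v, O1 x v -> Pv x v <> vzero).
  { intros x v Hxv E. apply (gram_indep (phix (K1 x v) v) (phiy (K1 x v) v) (K1v x v) 1) in E.
    - lra.
    - apply HT; auto. }
  assert (Cyl : forall x v, O1 x v -> P x v = vadd (P x v0) (vscale ((v1 (P x v) - v1 (P x v0)) / v1 T0) T0)).
  { intros x v [Hx Hv]. apply vec_eq_isc. intros pr Hpr.
    rewrite isc_add, isc_scale; auto.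
    set (D := fun s => pr (P x s) - pr (P x v0) - ((v1 (P x s) - v1 (P x v0)) / v1 T0) * pr T0).
    assert (E := zero_deriv_const D v0 v).
    assert (D0 : D v0 = 0) by (unfold D; unfold Rdiv; ring).
    assert (Dv : D v = 0).
    { rewrite E, D0; auto. intros s Hs.
      assert (Os : O1 x s) by (split; auto; lra).
      destruct (PvT x s Os) as [l El].
      set (c2 := - pr T0 / v1 T0).
      set (c1 := - pr (P x v0) + v1 (P x v0) * pr T0 / v1 T0).
      assert (ED : D = fun s => pr (P x s) + (c1 + c2 * v1 (P x s))).
      { apply functional_extensionality; intro t; unfold D, c1, c2. field; auto. }
      rewrite ED. apply dpl_eq with (pr (Pv x s) + (0 + c2 * v1 (Pv x s))).
      - apply dpl_plus; [apply DP; auto| apply dpl_plus; [apply dpl_const| apply dpl_scal]].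
        apply (DP v1); auto. unfold isc; auto.
      - rewrite El, isc_scale; auto. simpl. unfold c2. field; auto. }
    unfold D in Dv. lra. }
  set (I1 := fun x => x0 - eps1 < x < x0 + eps1).
  assert (IO : forall x, I1 x -> O1 x v0).
  { intros x Hx. split; [apply Rabs_def1; unfold I1 in Hx; lra| rewrite Rminus_eq_0, Rabs_R0; auto]. }
  assert (OI : forall x v, O1 x v -> I1 x).
  { intros x v [Hx _]. apply Rabs_def2 in Hx. unfold I1; lra. }
  assert (Ov0 : forall x v, O1 x v -> O1 x v0).
  { intros x v Hxv; apply IO; eapply OI; eauto. }
  assert (SPx0 : smooth_vec2 O1 (fun x _ => Px x v0)).
  { apply isc_sv2; intros pr Hpr. unfold Px.
    assert (SKv0 : smooth2 O1 (fun x _ => K1 x v0)).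
    { apply (sm_comp O1 O1 K1 (fun x _ => x) (fun _ _ => v0)); try apply sm_proj1; try apply sm_const; auto.
      }
    assert (SKxv0 : smooth2 O1 (fun x _ => K1x x v0)).
    { apply (sm_comp O1 O1 K1x (fun x _ => x) (fun _ _ => v0)); try apply sm_proj1; try apply sm_const; auto.
      }
    assert (Sphx : smooth2 O1 (fun x _ => pr (phix (K1 x v0) v0))).
    { apply (sm_comp O1 U (fun a b => pr (phix a b)) (fun x _ => K1 x v0) (fun _ _ => v0));
        [exact OO1| exact HO| apply sv2_isc; auto| exact SKv0| apply sm_const|].
      intros x y Hxy; apply UK; apply Ov0 with y; auto. }
    apply (sm_ext O1 (fun x v => K1x x v0 * pr (phix (K1 x v0) v0))); [exact OO1| |].
    { intros; rewrite isc_scale; auto. }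
    apply sm_mult; auto. }
  set (Q := fun x => - ip (Px x v0) (Px x v0) / 2).
  assert (SQ : smooth1 I1 Q).
  { apply (sm_slice O1 I1 (fun x _ => Q x) v0); auto. unfold Q.
    apply sm_div; [exact OO1| intros ? ? _; cbv beta; lra| |apply sm_const].
    apply sm_opp; auto. apply (sm_ip O1 (fun x _ => Px x v0) (fun x _ => Px x v0)); auto. }
  assert (HI0 : I1 x0) by (unfold I1; lra).
  destruct (antideriv Q (x0 - eps1) (x0 + eps1) x0 HI0 (SQ 0%nat)) as [mu0 Dmu].
  set (mu := fun x => RInt Q x0 x) in *.
  assert (Smu : smooth1 I1 mu) by (apply (smooth1_of_deriv I1 mu Q); auto).
  set (alpha := fun x => vadd (P x v0) (vscale (mu x) T0)).
  set (dalpha := fun x => vadd (Px x v0) (vscale (Q x) T0)).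
  assert (Dalpha : is_deriv_vec1 I1 alpha dalpha).
  { apply isc_dv1. intros x Hx pr Hpr.
    assert (E : (fun t => pr (alpha t)) = fun t => pr (P t v0) + pr T0 * mu t).
    { apply functional_extensionality; intro t; unfold alpha. rewrite isc_add, isc_scale; auto; ring. }
    rewrite E. unfold dalpha. rewrite isc_add, isc_scale; auto.
    eapply dpl_eq; [apply dpl_plus; [apply DP; auto| apply dpl_scal; apply Dmu; auto]| ring]. }
  assert (Salpha : smooth_vec1 I1 alpha).
  { apply isc_sv1. intros pr Hpr.
    assert (E : (fun t => pr (alpha t)) = fun t => pr (P t v0) + mu t * pr T0).
    { apply functional_extensionality; intro t; unfold alpha. rewrite isc_add, isc_scale; auto. }
    rewrite E. apply (sm_slice O1 I1 (fun x _ => pr (P x v0) + mu x * pr T0) v0); auto.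
    apply sm_plus; [|apply sm_mult; auto; [apply (sm_lift I1 O1); auto| apply sm_const]].
    apply (sm_comp O1 O1 (fun a b => pr (P a b)) (fun x _ => x) (fun _ _ => v0)); auto;
      [apply sm_proj1| apply sm_const]. }
  assert (Lalpha : forall x, I1 x -> lightlike (dalpha x)).
  { intros x Hx. assert (Hp := IPx x v0 (IO x Hx)).
    assert (E1 : ip (dalpha x) T0 = ip (Px x v0) T0 + Q x * ip T0 T0) by (unfold dalpha, ip; simpl; ring).
    assert (E2 : ip (dalpha x) (dalpha x) = ip (Px x v0) (Px x v0) + 2 * Q x * ip (Px x v0) T0 + Q x * Q x * ip T0 T0)
      by (unfold dalpha, ip; simpl; ring).
    split.
    - intro Ez. rewrite Ez in E1. rewrite Hp, T0l in E1. unfold ip, vzero in E1; simpl in E1. lra.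
    - rewrite E2, Hp, T0l. unfold Q. field. }
  assert (Ialpha : forall x, I1 x -> lin_indep2 (dalpha x) T0).
  { intros x Hx a b E. assert (Hp := IPx x v0 (IO x Hx)).
    assert (E1 : ip (vadd (vscale a (dalpha x)) (vscale b T0)) T0 = a * (ip (Px x v0) T0 + Q x * ip T0 T0) + b * ip T0 T0)
      by (unfold dalpha, ip; simpl; ring).
    rewrite E, Hp, T0l in E1. unfold ip, vzero in E1; simpl in E1.
    assert (Ha : a = 0) by lra. split; auto.
    rewrite Ha in E. assert (E' := f_equal v1 E). simpl in E'.
    assert (E'' : b * v1 T0 = 0) by lra.
    apply Rmult_integral in E''. destruct E''; auto. contradiction. }
  assert (Ox0 : O1 x0 v0) by (apply IO; auto).
  set (Y := fun x v => (v1 (P x v) - v1 (P x v0)) / v1 T0 - mu x).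
  assert (Pv0 : smooth2 O1 (fun x _ => v1 (P x v0))).
  { apply (sm_comp O1 O1 (fun a b => v1 (P a b)) (fun x _ => x) (fun _ _ => v0));
      try apply sm_proj1; try apply sm_const; auto. apply SP; unfold isc; auto. }
  assert (SY : smooth2 O1 Y).
  { unfold Y. apply sm_minus; [exact OO1| |apply (sm_lift I1 O1 mu); auto].
    apply sm_div; [exact OO1| intros ? ? _; cbv beta; auto| |apply sm_const].
    apply sm_minus; auto. apply SP; unfold isc; auto. }
  assert (Cyl2 : forall x v, O1 x v -> P x v = vadd (alpha x) (vscale (Y x v) T0)).
  { intros x v Hxv. rewrite (Cyl x v Hxv) at 1. unfold alpha, Y.
    apply vec_eq_isc; intros pr Hpr. rewrite !isc_add, !isc_scale; auto. ring. }
  destruct (sm_partials O1 Y OO1 SY) as [Yx [Yv [DY [SYx SYv]]]].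
  assert (Yv0 : Yv x0 v0 <> 0).
  { assert (D1 : derivable_pt_lim (fun t => Y x0 t) v0 (/ v1 T0 * v1 (Pv x0 v0) + 0)).
    { assert (E : (fun t => Y x0 t) = fun t => / v1 T0 * v1 (P x0 t) + (- v1 (P x0 v0) / v1 T0 - mu x0)).
      { apply functional_extensionality; intro t; unfold Y. field; auto. }
      rewrite E. apply dpl_plus; [apply dpl_scal; apply (DP v1)| apply dpl_const]; auto. unfold isc; auto. }
    assert (E := uniqueness_limite _ _ _ _ (proj2 (DY x0 v0 Ox0)) D1). rewrite E.
    destruct (PvT x0 v0 Ox0) as [l El].
    assert (Hl : l <> 0).
    { intro Hl. apply (Pvn x0 v0 Ox0). rewrite El, Hl. apply vec_eq; simpl; ring. }
    rewrite El; simpl. replace (/ v1 T0 * (l * v1 T0) + 0) with l by (field; auto). auto. }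
  set (U2 := fun t p => O1 p t).
  assert (OU2 : open2 U2) by (apply open2_swap; auto).
  assert (DY2 : forall t p, U2 t p -> derivable_pt_lim (fun s => Y p s) t (Yv p t) /\
                                    derivable_pt_lim (fun s => Y s t) p (Yx p t)).
  { intros t p Htp. destruct (DY p t Htp); split; auto. }
  destruct (ift U2 (fun t p => Y p t) (fun t p => Yv p t) (fun t p => Yx p t) v0 x0 OU2 Ox0 DY2
              (sm_swap O1 Y SY) (sm_swap O1 Yv SYv) (sm_swap O1 Yx SYx) Yv0)
    as [eps2 [dl2 [r2 [K2 [He2 [Hdl2 [Hr2 [B1 [B2 [B3 B4]]]]]]]]]].
  cbv beta in B1, B2, B3, B4.
  set (y0 := Y x0 v0) in *.
  set (h1 := fun x y => K1 x (K2 y x)). set (h2 := fun x y => K2 y x).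
  set (g2 := fun u v => Y (F u v) v).
  set (Bx := fun u v => Rabs (u - u0) < r1 /\ Rabs (v - v0) < Rmin dl1 r2).
  assert (M1 := Rmin_l dl1 r2). assert (M2 := Rmin_r dl1 r2).
  assert (M3 := Rmin_l eps1 dl2). assert (M4 := Rmin_r eps1 dl2).
  assert (BxU : forall u v, Bx u v -> U u v).
  { intros u v [Hu Hv]. apply A1; auto; lra. }
  assert (OBx : open2 Bx) by apply open_box.
  set (V1 := fun u v => Bx u v /\ (Rabs (F u v - x0) < Rmin eps1 dl2 /\ Rabs (v - v0) < dl1)).
  assert (OV1 : open2 V1).
  { apply (open_preimage Bx (fun a b => Rabs (a - x0) < Rmin eps1 dl2 /\ Rabs (b - v0) < dl1) F (fun _ v => v));
      [exact OBx| apply open_box| |].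
    - apply sm_cont; auto. apply (sm_restrict U); auto.
    - apply sm_cont; auto. apply sm_proj2. }
  assert (V1U : forall u v, V1 u v -> U u v) by (intros u v [H _]; auto).
  assert (V1O1 : forall u v, V1 u v -> O1 (F u v) v) by (intros u v [_ [H1 H2]]; split; auto; lra).
  assert (Sg2 : smooth2 V1 g2).
  { apply (sm_comp V1 O1 Y F (fun _ v => v)); auto; [apply (sm_restrict U); auto| apply sm_proj2]. }
  set (V := fun u v => V1 u v /\ (Rabs (g2 u v - y0) < eps2 /\ Rabs (0 - 0) < 1)).
  assert (OV : open2 V).
  { apply (open_preimage V1 (fun a b => Rabs (a - y0) < eps2 /\ Rabs (b - 0) < 1) g2 (fun _ _ => 0));
      [exact OV1| apply open_box| |].
    - apply sm_cont; auto.
    - apply sm_cont; auto. apply sm_const. }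
  assert (VV1 : forall u v, V u v -> V1 u v) by (intros u v [H _]; auto).
  set (Dbox := fun x y => Rabs (x - x0) < dl2 /\ Rabs (y - y0) < eps2).
  assert (ODbox : open2 Dbox) by apply open_box.
  assert (DO1 : forall x y, Dbox x y -> O1 x (K2 y x) /\ Y x (K2 y x) = y).
  { intros x y [Hx Hy]. destruct (B3 y x Hy Hx) as [K2r K2Y]. split; auto.
    apply (B1 (K2 y x) x K2r Hx). }
  assert (Sh2 : smooth2 Dbox h2).
  { apply (sm_restrict (fun x y => Rabs (y - y0) < eps2 /\ Rabs (x - x0) < dl2)).
    - apply (sm_swap (fun z p => Rabs (z - y0) < eps2 /\ Rabs (p - x0) < dl2) K2 B4).
    - intros x y [H1 H2]; split; auto. }
  assert (Sh1 : smooth2 Dbox h1).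
  { apply (sm_comp Dbox O1 K1 (fun x _ => x) h2); auto; [apply sm_proj1| ].
    intros x y Hxy. apply DO1; auto. }
  set (W := fun x y => Dbox x y /\ V (h1 x y) (h2 x y)).
  assert (OW : open2 W).
  { apply (open_preimage Dbox V h1 h2); auto; apply sm_cont; auto. }
  assert (WD : forall x y, W x y -> Dbox x y) by (intros x y [H _]; auto).
  exists V, W, (x0 - eps1), (x0 + eps1), alpha, dalpha, T0, h1, h2, F, g2.
  split; [exact OV|]. split; [intros u v Huv; apply V1U, VV1; auto|].
  split.
  { assert (B0 : Bx u0 v0) by (split; rewrite Rminus_eq_0, Rabs_R0; [auto| apply Rmin_pos; auto]).
    assert (FF : F u0 v0 = x0) by reflexivity.
    split; [split; [exact B0| rewrite FF, Rminus_eq_0, Rabs_R0; split; [apply Rmin_pos; auto| rewrite Rminus_eq_0, Rabs_R0; auto]]|].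
    unfold g2. rewrite FF. fold y0. rewrite !Rminus_eq_0, Rabs_R0. split; [auto| lra]. }
  split; [exact OW|]. split; [lra|].
  split; [intros x y Hxy; destruct (DO1 x y (WD x y Hxy)) as [[Hx _] _]; apply Rabs_def2 in Hx; lra|].
  split; [exact Salpha|]. split; [exact Dalpha|]. split; [exact Lalpha|].
  split; [split; auto|]. split; [exact Ialpha|].
  split; [apply (sm_restrict Dbox); auto|]. split; [apply (sm_restrict Dbox); auto|].
  split; [apply (sm_restrict U); auto; intros u v Huv; apply V1U, VV1; auto|].
  split; [apply (sm_restrict V1); auto|].
  split; [|split].
  - intros x y Hxy. destruct Hxy as [HD HV]. split; auto.
    destruct (DO1 x y HD) as [HO1 HY].
    assert (Fh : F (h1 x y) (h2 x y) = x) by (apply FK; auto).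
    split; auto. unfold g2. rewrite Fh. auto.
  - intros u v Huv.
    destruct Huv as [[[Hu Hv] [HF Hv1]] [Hg2 _]].
    assert (E2 : h2 (F u v) (g2 u v) = v).
    { unfold h2, g2. apply B2; [lra| lra| auto]. }
    assert (E1 : h1 (F u v) (g2 u v) = u).
    { unfold h1. fold (h2 (F u v) (g2 u v)). rewrite E2. apply A2; auto; lra. }
    rewrite E1, E2. split; [|split; auto].
    split; [split; [lra| exact Hg2]|].
    rewrite E1, E2. split; [split; [split; auto| split; auto]| split; auto; rewrite Rminus_eq_0, Rabs_R0; lra].
  - intros x y Hxy. destruct (DO1 x y (WD x y Hxy)) as [HO1 HY].
    change (P x (K2 y x) = vadd (alpha x) (vscale y T0)).
    rewrite (Cyl2 x (K2 y x) HO1), HY. reflexivity.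
Qed.


Lemma concl_mono U U' phi u0 v0 : (forall u v, U' u v -> U u v) -> concl U' phi u0 v0 -> concl U phi u0 v0.
Proof.
  intros HU [V [W [a [b [al [dal [T0 [h1 [h2 [g1 [g2 [H1 [H2 R]]]]]]]]]]]]].
  exists V, W, a, b, al, dal, T0, h1, h2, g1, g2. split; auto.
Qed.

Lemma concl_swap U phi u0 v0 : concl (fun u v => U v u) (fun u v => phi v u) v0 u0 -> concl U phi u0 v0.
Proof.
  intros [V [W [a [b [al [dal [T0 [h1 [h2 [g1 [g2
     [OV [VU [V0 [OW [Hab [Wab [Sal [Dal [Lal [LT [Ind [S1 [S2 [S3 [S4 [I1 [I2 Ph]]]]]]]]]]]]]]]]]]]]]]]]]]]].
  exists (fun u v => V v u), W, a, b, al, dal, T0, h2, h1, (fun u v => g1 v u), (fun u v => g2 v u).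
  split; [apply open2_swap; auto|]. split; [intros u v H; apply (VU v u H)|].
  split; [auto|]. split; [auto|]. split; [auto|]. split; [auto|].
  split; [auto|]. split; [auto|]. split; [auto|]. split; [auto|]. split; [auto|].
  split; [auto|]. split; [auto|]. split; [apply sm_swap; auto|]. split; [apply sm_swap; auto|].
  split; [|split].
  - intros x y Hxy. destruct (I1 x y Hxy) as [Q1 [Q2 Q3]]. auto.
  - intros u v Huv. destruct (I2 v u Huv) as [Q1 [Q2 Q3]]. auto.
  - intros x y Hxy. apply (Ph x y Hxy).
Qed.

Theorem mainTheorem10 (U : R -> R -> Prop) (phi phix phiy : R -> R -> vec) (Z : vec)
  (Hsurf : timelike_surface U phi phix phiy)
  (Hnull : canonical_null_direction U phix phiy Z) :
  forall u0 v0, U u0 v0 ->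
  exists (V W : R -> R -> Prop) (a b : R) (alpha dalpha : R -> vec) (T0 : vec)
         (h1 h2 g1 g2 : R -> R -> R),
    (* V: open neighbourhood of (u0,v0) in U; W: open parameter domain *)
    open2 V /\ (forall u v, V u v -> U u v) /\ V u0 v0 /\
    open2 W /\ a < b /\ (forall x y, W x y -> a < x < b) /\
    (* alpha : (a,b) -> R^{2,1} is a smooth lightlike curve *)
    smooth_vec1 (fun x => a < x < b) alpha /\
    is_deriv_vec1 (fun x => a < x < b) alpha dalpha /\
    (forall x, a < x < b -> lightlike (dalpha x)) /\
    (* T0 constant lightlike, independent of alpha' *)
    lightlike T0 /\
    (forall x, a < x < b -> lin_indep2 (dalpha x) T0) /\
    (* (h1,h2) : W -> V is a diffeomorphism with inverse (g1,g2) *)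
    smooth2 W h1 /\ smooth2 W h2 /\ smooth2 V g1 /\ smooth2 V g2 /\
    (forall x y, W x y ->
       V (h1 x y) (h2 x y) /\ g1 (h1 x y) (h2 x y) = x /\ g2 (h1 x y) (h2 x y) = y) /\
    (forall u v, V u v ->
       W (g1 u v) (g2 u v) /\ h1 (g1 u v) (g2 u v) = u /\ h2 (g1 u v) (g2 u v) = v) /\
    (* psi(x,y) = alpha(x) + y T0 reparametrizes M near (u0,v0) *)
    (forall x y, W x y -> phi (h1 x y) (h2 x y) = vadd (alpha x) (vscale y T0)).
Proof.
  intros u0 v0 H0. change (concl U phi u0 v0).
  destruct Hsurf as [HO [Sphi [HP [Hind HT]]]].
  assert (Sxy : smooth_vec2 U phix /\ smooth_vec2 U phiy).
  { assert (G : forall pr, isc pr -> smooth2 U (fun x y => pr (phix x y)) /\ smooth2 U (fun x y => pr (phiy x y))).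
    { intros pr Hpr. destruct (sm_partials U _ HO (sv2_isc U phi Sphi pr Hpr)) as [fx [fy [Df [Sfx Sfy]]]].
      split.
      - apply (sm_ext U fx); auto. intros x y Hxy.
        apply (uniqueness_limite (fun t => pr (phi t y)) x); [apply Df; auto| apply (partials_isc U phi phix phiy HP pr Hpr); auto].
      - apply (sm_ext U fy); auto. intros x y Hxy.
        apply (uniqueness_limite (fun t => pr (phi x t)) y); [apply Df; auto| apply (partials_isc U phi phix phiy HP pr Hpr); auto]. }
    split; apply isc_sv2; intros pr Hpr; apply G; auto. }
  destruct Sxy as [Sx Sy].
  destruct (select U phix phiy Z u0 v0 HO H0 Sx Sy HT Hnull) as [rho [Hrho Hsel]].
  set (T0 := tangential_part Z (phix u0 v0) (phiy u0 v0)) in *.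
  assert (LT : lightlike T0) by (apply Hnull; auto).
  set (U' := fun u v => Rabs (u - u0) < rho /\ Rabs (v - v0) < rho).
  assert (OU' : open2 U') by apply open_box.
  assert (U'U : forall u v, U' u v -> U u v) by (intros u v [Hu Hv]; apply Hsel; auto).
  assert (H0' : U' u0 v0) by (split; rewrite Rminus_eq_0, Rabs_R0; auto).
  assert (Span : forall x y, U' x y -> exists c d, T0 = vadd (vscale c (phix x y)) (vscale d (phiy x y))).
  { intros x y [Hx Hy]. apply Hsel; auto. }
  assert (Sv : forall A, smooth_vec2 U A -> smooth_vec2 U' A).
  { intros A [A1 [A2 A3]]. repeat split; apply (sm_restrict U); auto. }
  assert (HP' : is_partials U' phi phix phiy) by (intros x y Hxy; apply HP; auto).
  assert (HT' : forall x y, U' x y -> timelike_plane (phix x y) (phiy x y)) by (intros; apply HT; auto).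
  destruct (Span u0 v0 H0') as [p [q Epq]].
  destruct LT as [T0n T0l].
  destruct (grad_nz (phix u0 v0) (phiy u0 v0) p q T0 (HT u0 v0 H0) Epq T0n) as [G1|G2].
  - apply (concl_mono U U'); auto. apply (core U' phi phix phiy T0); auto. split; auto.
  - apply (concl_mono U U'); auto. apply concl_swap.
    apply (core (fun u v => U' v u) (fun u v => phi v u) (fun u v => phiy v u) (fun u v => phix v u) T0 v0 u0).
    + apply open2_swap; auto.
    + auto.
    + apply isc_sv2; intros pr Hpr. apply (sm_swap U' (fun x y => pr (phi x y))). apply sv2_isc; auto.
    + apply isc_sv2; intros pr Hpr. apply (sm_swap U' (fun x y => pr (phiy x y))). apply sv2_isc; auto.
    + apply isc_sv2; intros pr Hpr. apply (sm_swap U' (fun x y => pr (phix x y))). apply sv2_isc; auto.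
    + intros x y Hxy. destruct (HP' y x Hxy) as [D1 [D2 [D3 [D4 [D5 D6]]]]]. repeat split; auto.
    + intros x y Hxy. assert (Ht := HT' y x Hxy). unfold timelike_plane, ip in *. lra.
    + intros x y Hxy. destruct (Span y x Hxy) as [c [d Ecd]]. exists d, c. rewrite Ecd.
      apply vec_eq; simpl; ring.
    + split; auto.
    + auto.
Qed.
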